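(* Assume CH. There exists a set $A\subseteq\mathbb{R}^2$ which is a Hamel basis of $\mathbb{R}^2$ over $\mathbb{Q}$ and such that: for every strictly increasing continuous function $f:\mathbb{R}\to\mathbb{R}$ the set $\{x\in\mathbb{R}:(x,f(x))\in A\}$ is a strong Luzin set, and for every strictly decreasing locally absolutely continuous function $g:\mathbb{R}\to\mathbb{R}$ the set $\{x\in\mathbb{R}:(x,g(x))\in A\}$ is a strong Sierpiński set.
   Context: A Luzin set is $L\subseteq\mathbb{R}$ with $|L|=\mathfrak{c}$ and $L\cap M$ countable for every meager $M$; strong Luzin if moreover $L\cap B$ is uncountable for every non-meager Borel $B$. A Sierpiński set is $S\subseteq\mathbb{R}$ with $|S|=\mathfrak{c}$ and $S\cap N$ countable for every Lebesgue-null $N$; strong Sierpiński if moreover $S\cap B$ is uncountable for every Borel $B$ of positive measure. (For a locally absolutely continuous $g$, a subset of its graph is null for arc-length measure iff its projection to the $x$-axis is Lebesgue-null, so the condition says $A\cap\mathrm{graph}(g)$ is a strong Sierpiński set in the graph.) A Hamel basis of $\mathbb{R}^2$ is a basis over $\mathbb{Q}$. *)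

(* Defs.v *)
From Stdlib Require Import Reals QArith Qreals List.
Open Scope R_scope.

Definition countable_set (S : R -> Prop) : Prop :=
  exists f : R -> nat, forall x y, S x -> S y -> f x = f y -> x = y.

Definition has_card_c (S : R -> Prop) : Prop :=
  exists f : R -> R, (forall y, S (f y)) /\
    (forall y1 y2, f y1 = f y2 -> y1 = y2) /\
    (forall x, S x -> exists y, f y = x).

Definition CH : Prop := forall S : R -> Prop, countable_set S \/ has_card_c S.

Definition inter (S T : R -> Prop) : R -> Prop := fun x => S x /\ T x.

Definition open_set (U : R -> Prop) : Prop :=
  forall x, U x -> exists eps, 0 < eps /\ forall y, Rabs (y - x) < eps -> U y.

Definition closure (S : R -> Prop) : R -> Prop :=
  fun x => forall eps, 0 < eps -> exists y, S y /\ Rabs (y - x) < eps.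

Definition nowhere_dense (S : R -> Prop) : Prop :=
  forall a b, a < b -> exists x, a < x < b /\ ~ closure S x.

Definition meager (M : R -> Prop) : Prop :=
  exists N : nat -> R -> Prop, (forall n, nowhere_dense (N n)) /\
    (forall x, M x -> exists n, N n x).

Inductive borel : (R -> Prop) -> Prop :=
  | borel_open : forall U, open_set U -> borel U
  | borel_compl : forall S, borel S -> borel (fun x => ~ S x)
  | borel_union : forall Sn : nat -> R -> Prop,
      (forall n, borel (Sn n)) -> borel (fun x => exists n, Sn n x)
  | borel_ext : forall S T, borel S -> (forall x, S x <-> T x) -> borel T.

Definition null_set (N : R -> Prop) : Prop :=
  forall eps, 0 < eps -> exists a b : nat -> R,
    (forall n, a n <= b n) /\
    (forall x, N x -> exists n, a n < x < b n) /\
    (forall n, sum_f_R0 (fun i => b i - a i) n <= eps).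

Definition strong_luzin (L : R -> Prop) : Prop :=
  has_card_c L /\
  (forall M, meager M -> countable_set (inter L M)) /\
  (forall B, borel B -> ~ meager B -> ~ countable_set (inter L B)).

(* For a Borel set B, "positive Lebesgue measure" = "not Lebesgue-null". *)
Definition strong_sierpinski (S : R -> Prop) : Prop :=
  has_card_c S /\
  (forall N, null_set N -> countable_set (inter S N)) /\
  (forall B, borel B -> ~ null_set B -> ~ countable_set (inter S B)).

Definition R2 := (R * R)%type.

Fixpoint lin_comb (l : list (Q * R2)) : R2 :=
  match l with
  | nil => (0, 0)
  | (q, v) :: l' =>
      let s := lin_comb l' in (Q2R q * fst v + fst s, Q2R q * snd v + snd s)
  end.

Definition Q_independent (A : R2 -> Prop) : Prop :=
  forall l : list (Q * R2),
    NoDup (map snd l) -> Forall (fun p => A (snd p)) l ->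
    lin_comb l = (0, 0) -> Forall (fun p => Q2R (fst p) = 0) l.

Definition Q_spanning (A : R2 -> Prop) : Prop :=
  forall v : R2, exists l : list (Q * R2),
    Forall (fun p => A (snd p)) l /\ lin_comb l = v.

Definition hamel_basis_R2 (A : R2 -> Prop) : Prop :=
  Q_independent A /\ Q_spanning A.

Definition strictly_increasing (f : R -> R) : Prop :=
  forall x y, x < y -> f x < f y.

Definition strictly_decreasing (f : R -> R) : Prop :=
  forall x y, x < y -> f y < f x.

Definition abs_continuous_on (g : R -> R) (a b : R) : Prop :=
  forall eps, 0 < eps -> exists delta, 0 < delta /\
    forall (n : nat) (u v : nat -> R),
      a <= u 0%nat ->
      v n <= b ->
      (forall i, (i <= n)%nat -> u i <= v i) ->
      (forall i, (i < n)%nat -> v i <= u (S i)) ->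
      sum_f_R0 (fun i => v i - u i) n < delta ->
      sum_f_R0 (fun i => Rabs (g (v i) - g (u i))) n < eps.

Definition locally_abs_continuous (g : R -> R) : Prop :=
  forall a b, a < b -> abs_continuous_on g a b.

(* Main.v *)
Require Import Defs.
From Stdlib Require Import ZArith Reals QArith Qreals List Lra Lia Classical ClassicalEpsilon
  FunctionalExtensionality PropExtensionality Cantor Wellfounded FinFun.
Open Scope R_scope.

Module WOM.
From mathcomp Require Import ssreflect ssrbool eqtype boolp.
From mathcomp Require Import wochoice Rstruct.
Lemma wo_exists : exists W : R -> R -> Prop,
  (forall S : R -> Prop, (exists x, S x) -> exists m, S m /\ forall y, S y -> W m y) /\
  (forall x y, W x y -> W y x -> x = y).
Proof.
case: (well_ordering_principle R) => W hW.
exists (fun x y => W x y = true); split.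
- move=> S [x Sx].
  have ne : nonempty (fun y => `[< S y >]).
    by exists x; rewrite /in_mem /= ; apply/asboolP.
  case: (hW _ ne) => m [[m1 m2] _].
  exists m; split.
    by move: m1; rewrite /in_mem /= => /asboolP.
  move=> y Sy; apply: m2; by rewrite /in_mem /=; apply/asboolP.
- have refl : forall x, W x x.
    move=> x.
    have ne : nonempty (fun z => (z == x)).
      by exists x; rewrite /in_mem /= eqxx.
    case: (hW _ ne) => m [[m1 m2] _].
    move: m1; rewrite /in_mem /= => /eqP Hm; subst m.
    by apply: m2; rewrite /in_mem /= eqxx.
  move=> x y hxy hyx.
  have ne : nonempty (fun z => (z == x) || (z == y)).
    by exists x; rewrite /in_mem /= eqxx.
  case: (hW _ ne) => m [[m1 m2] uniq].
  have ux : m = x.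
    apply: uniq; split; first by rewrite /in_mem /= eqxx.
    by move=> z; rewrite /in_mem /= => /orP [/eqP -> | /eqP ->].
  have uy : m = y.
    apply: uniq; split; first by rewrite /in_mem /= eqxx orbT.
    by move=> z; rewrite /in_mem /= => /orP [/eqP -> | /eqP ->].
  by rewrite -ux -uy.
Qed.

End WOM.
Definition wo_exists := WOM.wo_exists.


Definition cnt {X : Type} (S : X -> Prop) : Prop :=
  exists f : X -> nat, forall x y, S x -> S y -> f x = f y -> x = y.

Lemma pair_inj : forall a b c d : nat, to_nat (a, b) = to_nat (c, d) -> a = c /\ b = d.
Proof.
  intros a b c d H.
  assert (E := f_equal of_nat H). rewrite !cancel_of_to in E. injection E; auto.
Qed.

Lemma choice_on : forall (X Y : Type) (x0 : X) (T : Y -> Prop) (P : Y -> X -> Prop),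
  (forall y, T y -> exists x, P y x) -> exists h : Y -> X, forall y, T y -> P y (h y).
Proof.
  intros X Y x0 T P H.
  assert (H' : forall y, exists x, T y -> P y x).
  { intro y. destruct (classic (T y)) as [Ty | nTy].
    - destruct (H y Ty) as [x Hx]. exists x; auto.
    - exists x0; intro; contradiction. }
  exists (fun y => proj1_sig (constructive_indefinite_description _ (H' y))).
  intros y Ty. exact (proj2_sig (constructive_indefinite_description _ (H' y)) Ty).
Qed.

Lemma choice_tot : forall (X Y : Type) (P : Y -> X -> Prop),
  (forall y, exists x, P y x) -> exists h : Y -> X, forall y, P y (h y).
Proof.
  intros X Y P H.
  exists (fun y => proj1_sig (constructive_indefinite_description _ (H y))).
  intros y. exact (proj2_sig (constructive_indefinite_description _ (H y))).
Qed.

Lemma cnt_sub : forall X (S T : X -> Prop), (forall x, S x -> T x) -> cnt T -> cnt S.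
Proof. intros X S T H [f Hf]. exists f. intros; apply Hf; auto. Qed.

Lemma cnt_empty : forall X (S : X -> Prop), (forall x, ~ S x) -> cnt S.
Proof. intros X S H. exists (fun _ => 0%nat). intros x y Sx; exfalso; eapply H; eauto. Qed.

Lemma cnt_image : forall X Y (S : X -> Prop) (T : Y -> Prop) (g : X -> Y),
  cnt S -> (forall y, T y -> exists x, S x /\ g x = y) -> cnt T.
Proof.
  intros X Y S T g [f Hf] H.
  destruct (classic (exists y, T y)) as [[y0 Ty0] | Hn].
  - destruct (H y0 Ty0) as [x0 _].
    destruct (choice_on X Y x0 T (fun y x => S x /\ g x = y) H) as [h Hh].
    exists (fun y => f (h y)). intros y1 y2 T1 T2 E.
    destruct (Hh y1 T1) as [S1 G1]. destruct (Hh y2 T2) as [S2 G2].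
    rewrite <- G1, <- G2. f_equal. apply Hf; auto.
  - apply cnt_empty. intros y Ty. apply Hn; eauto.
Qed.

Lemma cnt_union : forall I X (x0 : X) (J : I -> Prop) (S : I -> X -> Prop),
  cnt J -> (forall i, J i -> cnt (S i)) ->
  cnt (fun x => exists i, J i /\ S i x).
Proof.
  intros I X x0 J S [fJ HJ] HS.
  destruct (classic (exists i, J i)) as [[i0 Ji0] | Hn].
  2: { apply cnt_empty. intros x [i [Ji _]]. apply Hn; eauto. }
  destruct (choice_on (X -> nat) I (fun _ => 0%nat) J
     (fun i g => forall x y, S i x -> S i y -> g x = g y -> x = y) HS) as [G HG].
  destruct (choice_on I X i0 (fun x => exists i, J i /\ S i x) (fun x i => J i /\ S i x))
    as [ix Hix]. { intros x H; exact H. }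
  exists (fun x => to_nat (fJ (ix x), G (ix x) x)).
  intros x y Tx Ty E. apply pair_inj in E. destruct E as [E1 E2].
  destruct (Hix x Tx) as [J1 S1]. destruct (Hix y Ty) as [J2 S2].
  assert (Ei : ix x = ix y) by (apply HJ; auto).
  rewrite Ei in E2, S1, J1. apply (HG (ix y)); auto.
Qed.

Lemma cnt_nat_union : forall X (x0 : X) (S : nat -> X -> Prop),
  (forall n, cnt (S n)) -> cnt (fun x => exists n, S n x).
Proof.
  intros X x0 S H.
  apply cnt_sub with (T := fun x => exists n, (fun _ => True) n /\ S n x).
  - intros x [n Hn]; eauto.
  - apply cnt_union; auto. exists (fun n => n); auto.
Qed.

Lemma cnt_union2 : forall X (x0 : X) (S T : X -> Prop),
  cnt S -> cnt T -> cnt (fun x => S x \/ T x).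
Proof.
  intros X x0 S T HS HT.
  apply (cnt_sub X _ (fun x => exists n, (if Nat.eqb n 0 then S else T) x)).
  - intros x [H|H]; [exists 0%nat | exists 1%nat]; auto.
  - apply cnt_nat_union; auto. intros [|n]; simpl; auto.
Qed.

Lemma cnt_single : forall X (a : X), cnt (fun x => x = a).
Proof. intros X a. exists (fun _ => 0%nat). intros x y -> ->; auto. Qed.

Lemma cnt_subsingleton : forall X (S : X -> Prop), (forall x y, S x -> S y -> x = y) -> cnt S.
Proof. intros X S H. exists (fun _ => 0%nat). intros; auto. Qed.

Lemma cnt_prod : forall X Y (S : X -> Prop) (T : Y -> Prop),
  cnt S -> cnt T -> cnt (fun p : X * Y => S (fst p) /\ T (snd p)).
Proof.
  intros X Y S T [f Hf] [g Hg].
  exists (fun p => to_nat (f (fst p), g (snd p))).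
  intros [a b] [c d] [H1 H2] [H3 H4] E. simpl in *. apply pair_inj in E.
  destruct E. f_equal; auto.
Qed.

Fixpoint enc_list (l : list nat) : nat :=
  match l with nil => 0%nat | a :: l' => S (to_nat (a, enc_list l')) end.

Lemma enc_list_inj : forall l l', enc_list l = enc_list l' -> l = l'.
Proof.
  induction l as [|a l IH]; intros [|b l'] E; simpl in E; try discriminate; auto.
  injection E as E. apply pair_inj in E. destruct E as [-> E]. f_equal; auto.
Qed.

Lemma cnt_list : forall X (S : X -> Prop), cnt S -> cnt (fun l => Forall S l).
Proof.
  intros X S [f Hf].
  exists (fun l => enc_list (map f l)).
  intros l l' Hl Hl' E. apply enc_list_inj in E.
  revert l' Hl' E. induction Hl as [|a l Sa Hl IH]; intros [|b l'] Hl' E; simpl in E;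
    try discriminate; auto.
  injection E as E1 E2. inversion Hl'; subst. f_equal; auto.
Qed.

Lemma cnt_all_nat : cnt (fun _ : nat => True).
Proof. exists (fun n => n); auto. Qed.

Lemma cnt_Q : cnt (fun _ : Q => True).
Proof.
  exists (fun q => to_nat (to_nat (Z.to_nat (Qnum q), Z.to_nat (- Qnum q)), Pos.to_nat (Qden q))).
  intros [a b] [c d] _ _ E. simpl in E. apply pair_inj in E. destruct E as [E1 E2].
  apply pair_inj in E1. destruct E1. f_equal; [lia | lia].
Qed.


Definition vadd (u w : R2) : R2 := (fst u + fst w, snd u + snd w).
Definition vsc (r : R) (u : R2) : R2 := (r * fst u, r * snd u).

Definition span (S : R2 -> Prop) (v : R2) : Prop :=
  exists l, Forall (fun p => S (snd p)) l /\ lin_comb l = v.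

Lemma R2_eq : forall u w : R2, fst u = fst w -> snd u = snd w -> u = w.
Proof. intros [a b] [c d]; simpl; intros; subst; auto. Qed.

Lemma lin_comb_app : forall l1 l2, lin_comb (l1 ++ l2) = vadd (lin_comb l1) (lin_comb l2).
Proof.
  induction l1 as [|[q v] l IH]; intros l2; simpl.
  - unfold vadd; apply R2_eq; simpl; ring.
  - rewrite IH. unfold vadd; apply R2_eq; simpl; ring.
Qed.

Definition qsc (q : Q) (l : list (Q * R2)) : list (Q * R2) :=
  map (fun p => (q * fst p, snd p)%Q) l.

Lemma lin_comb_qsc : forall q l, lin_comb (qsc q l) = vsc (Q2R q) (lin_comb l).
Proof.
  induction l as [|[r v] l IH]; simpl.
  - unfold vsc; apply R2_eq; simpl; ring.
  - rewrite IH. unfold vsc; apply R2_eq; simpl; rewrite Q2R_mult; ring.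
Qed.

Lemma span_mono : forall (S T : R2 -> Prop) v, (forall p, S p -> T p) -> span S v -> span T v.
Proof.
  intros S T v H [l [Hl E]]. exists l; split; auto.
  eapply Forall_impl; [|exact Hl]. intros; simpl; auto.
Qed.

Lemma span_mem : forall (S : R2 -> Prop) a, S a -> span S a.
Proof.
  intros S a Ha. exists ((1%Q, a) :: nil). split.
  - constructor; auto.
  - simpl. apply R2_eq; simpl; unfold Q2R; simpl; field.
Qed.

Lemma span_zero : forall S, span S (0, 0).
Proof. intros S. exists nil; split; auto. Qed.

Lemma span_add : forall S u w, span S u -> span S w -> span S (vadd u w).
Proof.
  intros S u w [l1 [H1 E1]] [l2 [H2 E2]]. exists (l1 ++ l2). split.
  - apply Forall_app; auto.
  - rewrite lin_comb_app, E1, E2; auto.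
Qed.

Lemma span_qsc : forall S q u, span S u -> span S (vsc (Q2R q) u).
Proof.
  intros S q u [l [H E]]. exists (qsc q l). split.
  - unfold qsc. apply Forall_map. eapply Forall_impl; [|exact H]. intros; simpl; auto.
  - rewrite lin_comb_qsc, E; auto.
Qed.

Lemma span_cnt : forall S, cnt S -> cnt (span S).
Proof.
  intros S HS.
  assert (H1 : cnt (fun p : Q * R2 => (fun _ => True) (fst p) /\ S (snd p)))
    by (apply (cnt_prod Q R2 (fun _ => True) S); auto; apply cnt_Q).
  apply cnt_list in H1.
  apply (cnt_image _ _ _ _ lin_comb H1).
  intros v [l [Hl E]]. exists l. split; auto.
  eapply Forall_impl; [|exact Hl]. intros; simpl; auto.
Qed.

Lemma span_insert : forall S a v, span (fun p => S p \/ p = a) v ->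
  exists w q, span S w /\ v = vadd w (vsc (Q2R q) a).
Proof.
  intros S a v [l [Hl E]]. subst v. induction Hl as [|[q p] l Hp Hl IH].
  - exists (0,0), 0%Q. split; [apply span_zero|]. apply R2_eq; simpl; unfold Q2R; simpl; ring.
  - destruct IH as [w [r [Hw E]]]. simpl in Hp. simpl lin_comb. rewrite E.
    destruct Hp as [Hp | Hp].
    + exists (vadd (vsc (Q2R q) p) w), r. split.
      * apply span_add; auto. apply span_qsc, span_mem; auto.
      * unfold vadd, vsc; apply R2_eq; simpl; ring.
    + subst p. exists w, (q + r)%Q. split; auto.
      unfold vadd, vsc; apply R2_eq; simpl; rewrite Q2R_plus; ring.
Qed.

Lemma max_split : forall (Y K : Type) (f : Y -> K) (r : K -> K -> Prop)
  (tot : forall a b, a <> b -> r a b \/ r b a)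
  (trans : forall a b c, r a b -> r b c -> r a c)
  (l : list Y), l <> nil -> NoDup (map f l) ->
  exists l1 x l2, l = l1 ++ x :: l2 /\ forall y, In y (l1 ++ l2) -> r (f y) (f x).
Proof.
  intros Y K f r tot trans l. induction l as [|a t IH]; intros Hne Hnd; [congruence|].
  destruct t as [|b t'].
  - exists nil, a, nil. split; auto. simpl; tauto.
  - simpl in Hnd. inversion Hnd as [|? ? Hnin Hnd']; subst.
    destruct (IH ltac:(congruence) Hnd') as [l1 [x [l2 [E Hmax]]]].
    assert (Hax : f a <> f x).
    { intro Ex. apply Hnin. rewrite Ex. change (In (f x) (map f (b :: t'))).
      rewrite E. apply in_map. apply in_or_app; right; left; auto. }
    destruct (tot _ _ Hax) as [Hr | Hr].
    + exists (a :: l1), x, l2. split; [rewrite E; auto|].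
      intros y [Hy | Hy]; [subst; auto | auto].
    + exists nil, a, (b :: t'). split; auto.
      intros y Hy. change (In y (b :: t')) in Hy. rewrite E in Hy.
      apply in_app_or in Hy. destruct Hy as [Hy | [Hy | Hy]].
      * eapply trans; [apply Hmax; apply in_or_app; auto | auto].
      * subst; auto.
      * eapply trans; [apply Hmax; apply in_or_app; auto | auto].
Qed.

Lemma lin_comb_mid : forall l1 q p l2,
  lin_comb (l1 ++ (q, p) :: l2) = vadd (vsc (Q2R q) p) (lin_comb (l1 ++ l2)).
Proof.
  intros. rewrite !lin_comb_app. simpl. unfold vadd, vsc. apply R2_eq; simpl; ring.
Qed.

Lemma indep_of_keys : forall (K : Type) (k0 : K) (klt : K -> K -> Prop) (pt : K -> option R2),
  (forall a b, a <> b -> klt a b \/ klt b a) ->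
  (forall a b c, klt a b -> klt b c -> klt a c) ->
  (forall k p, pt k = Some p -> ~ span (fun q => exists k', klt k' k /\ pt k' = Some q) p) ->
  Q_independent (fun p => exists k, pt k = Some p).
Proof.
  intros K k0 klt pt tot trans Hind.
  destruct (choice_on K R2 k0 (fun p => exists k, pt k = Some p) (fun p k => pt k = Some p))
    as [key Hkey]. { intros p Hp; exact Hp. }
  assert (Main : forall n l, (length l <= n)%nat -> NoDup (map snd l) ->
     Forall (fun p => exists k, pt k = Some (snd p)) l -> lin_comb l = (0, 0) ->
     Forall (fun p => Q2R (fst p) = 0) l).
  { induction n as [|n IHn]; intros l Hlen Hnd HA E.
    - destruct l; simpl in Hlen; [constructor | lia].
    - destruct l as [|e t]; [constructor|].
      assert (Hnd' : NoDup (map (fun p => key (snd p)) (e :: t))).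
      { assert (Hinj : forall p1 p2, In p1 (e :: t) -> In p2 (e :: t) ->
           key (snd p1) = key (snd p2) -> snd p1 = snd p2).
        { intros p1 p2 I1 I2 Ek.
          rewrite Forall_forall in HA.
          assert (H1 := Hkey _ (HA _ I1)). assert (H2 := Hkey _ (HA _ I2)).
          rewrite Ek in H1. rewrite H1 in H2. injection H2; auto. }
        revert Hinj Hnd. generalize (e :: t). intros l0.
        induction l0 as [|a l0 IH]; intros Hinj Hnd; simpl; constructor.
        - intro Hin. apply in_map_iff in Hin. destruct Hin as [b [Eb Hb]].
          simpl in Hnd. inversion Hnd; subst.
          assert (snd b = snd a) by (apply Hinj; simpl; auto).
          apply H1. rewrite <- H. apply in_map; auto.
        - simpl in Hnd; inversion Hnd; subst. apply IH; auto.
          intros; apply Hinj; simpl; auto. }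
      destruct (max_split _ _ (fun p => key (snd p)) klt tot trans (e :: t) ltac:(congruence) Hnd')
        as [l1 [[q p] [l2 [El Hmax]]]].
      rewrite El in E, HA, Hnd, Hlen.
      rewrite lin_comb_mid in E.
      assert (HA' := HA). rewrite Forall_app in HA'. destruct HA' as [HA1 HA2].
      inversion HA2 as [|? ? Hp HA3]; subst. simpl in Hp.
      destruct (Req_dec (Q2R q) 0) as [Hq | Hq].
      + assert (E' : lin_comb (l1 ++ l2) = (0, 0)).
        { rewrite Hq in E. unfold vadd, vsc in E. simpl in E.
          injection E as E1 E2. apply R2_eq; simpl; lra. }
        assert (Hrest : Forall (fun p => Q2R (fst p) = 0) (l1 ++ l2)).
        { apply (IHn (l1 ++ l2)); auto.
          - rewrite app_length in *; simpl in Hlen; lia.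
          - rewrite map_app in *. simpl in Hnd. apply NoDup_remove_1 in Hnd; auto.
          - apply Forall_app; auto. }
        rewrite El. apply Forall_app in Hrest. destruct Hrest.
        apply Forall_app; split; auto.
      + exfalso. apply (Hind (key p) p (Hkey p Hp)).
        assert (Hq' : ~ (q == 0)%Q).
        { intro Hq0. apply Hq. rewrite (Qeq_eqR _ _ Hq0). unfold Q2R; simpl; ring. }
        exists (qsc (- / q)%Q (l1 ++ l2)). split.
        * unfold qsc. apply Forall_map. apply Forall_forall. intros y Hy. simpl.
          exists (key (snd y)). split.
          -- apply Hmax; auto.
          -- apply Hkey. rewrite Forall_forall in HA. apply HA.
             apply in_app_or in Hy; apply in_or_app; simpl; tauto.
        * rewrite lin_comb_qsc. rewrite Q2R_opp, Q2R_inv by auto.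
          unfold vadd, vsc in E. simpl in E. injection E as E1 E2.
          apply R2_eq; simpl.
          ++ apply (Rmult_eq_reg_l (Q2R q)); auto. field_simplify; auto. lra.
          ++ apply (Rmult_eq_reg_l (Q2R q)); auto. field_simplify; auto. lra. }
  intros l Hnd HA E. apply (Main (length l)); auto.
Qed.


Definition enum (n : nat) : R :=
  let (a, r) := of_nat n in let (b, q) := of_nat r in (INR a - INR b) / INR (S q).

Lemma INR_Z2Nat : forall z, INR (Z.to_nat z) - INR (Z.to_nat (- z)) = IZR z.
Proof.
  intros [|p|p]; simpl.
  - ring.
  - rewrite INR_IPR. unfold IZR. ring.
  - rewrite INR_IPR. unfold IZR. ring.
Qed.

Lemma enum_dense : forall x y, x < y -> exists n, x < enum n < y.
Proof.
  intros x y Hxy.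
  destruct (archimed (/ (y - x))) as [H1 _].
  set (q := Z.to_nat (up (/ (y - x)))).
  assert (Hq : / (y - x) < INR (S q)).
  { unfold q. rewrite S_INR. destruct (Z_lt_le_dec (up (/ (y - x))) 0) as [Hz|Hz].
    - assert (0 < / (y - x)) by (apply Rinv_0_lt_compat; lra).
      assert (H0 : IZR 0 < IZR (up (/ (y - x)))) by (simpl; lra).
      apply lt_IZR in H0. lia.
    - rewrite INR_IZR_INZ, Z2Nat.id by auto. lra. }
  assert (HSq : 0 < INR (S q)) by (apply lt_0_INR; lia).
  set (z := up (x * INR (S q))).
  destruct (archimed (x * INR (S q))) as [Hz1 Hz2]. fold z in Hz1, Hz2.
  exists (to_nat (Z.to_nat z, to_nat (Z.to_nat (- z), q))).
  unfold enum. rewrite !cancel_of_to. rewrite INR_Z2Nat. fold z.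
  assert (Hyx : 0 < y - x) by lra.
  assert (Hl : / INR (S q) < y - x).
  { apply (Rmult_lt_reg_l (/ (y - x))). apply Rinv_0_lt_compat; lra.
    rewrite Rinv_l by lra. apply (Rmult_lt_reg_r (INR (S q))); auto.
    rewrite Rmult_assoc, Rinv_l by lra. lra. }
  split.
  - apply (Rmult_lt_reg_r (INR (S q))); auto. unfold Rdiv. rewrite Rmult_assoc, Rinv_l by lra. lra.
  - apply (Rmult_lt_reg_r (INR (S q))); auto. unfold Rdiv. rewrite Rmult_assoc, Rinv_l by lra.
    apply Rle_lt_trans with (x * INR (S q) + 1); [lra|].
    apply (Rmult_lt_compat_r (INR (S q))) in Hl; auto. rewrite Rinv_l in Hl by lra. nra.
Qed.

Lemma cont_determined : forall f g : R -> R, continuity f -> continuity g ->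
  (forall n, f (enum n) = g (enum n)) -> f = g.
Proof.
  intros f g Hf Hg H. apply functional_extensionality. intro x.
  destruct (Req_dec (f x) (g x)) as [E|Ne]; auto. exfalso.
  set (d := Rabs (f x - g x)). assert (Hd : 0 < d) by (apply Rabs_pos_lt; lra).
  destruct (Hf x (d/2) ltac:(lra)) as [a1 [Ha1 Ha1']].
  destruct (Hg x (d/2) ltac:(lra)) as [a2 [Ha2 Ha2']].
  destruct (enum_dense x (x + Rmin a1 a2)) as [n [Hn1 Hn2]].
  { assert (0 < Rmin a1 a2) by (apply Rmin_glb_lt; auto). lra. }
  assert (D1 : Rabs (enum n - x) < a1).
  { rewrite Rabs_right by lra. assert (Rmin a1 a2 <= a1) by apply Rmin_l. lra. }
  assert (D2 : Rabs (enum n - x) < a2).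
  { rewrite Rabs_right by lra. assert (Rmin a1 a2 <= a2) by apply Rmin_r. lra. }
  assert (Nx : x <> enum n) by (apply Rlt_not_eq; lra).
  specialize (Ha1' (enum n) (conj (conj I Nx) D1)).
  specialize (Ha2' (enum n) (conj (conj I Nx) D2)).
  simpl in Ha1', Ha2'. unfold Rdist in *. rewrite H in Ha1'.
  unfold d in *.
  assert (Rabs (f x - g x) <= Rabs (f x - g (enum n)) + Rabs (g (enum n) - g x)).
  { replace (f x - g x) with ((f x - g (enum n)) + (g (enum n) - g x)) by ring.
    apply Rabs_triang. }
  rewrite <- Rabs_Ropp in Ha1'. replace (- (g (enum n) - f x)) with (f x - g (enum n)) in Ha1' by ring.
  lra.
Qed.

Definition tt4 (c : nat -> bool) (i : nat) : R := if c i then (/4) ^ (S i) else 0.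
Fixpoint Qs (c : nat -> bool) (n : nat) : R :=
  match n with O => 0 | S m => Qs c m + tt4 c m end.

Lemma tt4_bounds : forall c i, 0 <= tt4 c i <= (/4) ^ (S i).
Proof.
  intros c i. unfold tt4. assert (0 < (/4) ^ (S i)) by (apply pow_lt; lra).
  destruct (c i); lra.
Qed.

Lemma Qs_mono : forall c n m, Qs c n <= Qs c (n + m).
Proof.
  intros c n m. induction m as [|m IH].
  - rewrite Nat.add_0_r; lra.
  - rewrite Nat.add_succ_r. simpl. assert (H := tt4_bounds c (n + m)). lra.
Qed.

Lemma Qs_tail : forall c j m, Qs c (j + m) <= Qs c j + (/3) * (/4) ^ j * (1 - (/4) ^ m).
Proof.
  intros c j m. induction m as [|m IH].
  - rewrite Nat.add_0_r. simpl. lra.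
  - rewrite Nat.add_succ_r. simpl Qs. assert (H := tt4_bounds c (j + m)).
    replace ((/4)^(S(j+m))) with (/4 * ((/4)^j*(/4)^m)) in H by (simpl; rewrite pow_add; ring).
    simpl pow.
    assert (0 < (/4)^j) by (apply pow_lt; lra). assert (0 < (/4)^m) by (apply pow_lt; lra).
    nra.
Qed.

Lemma Qs_bound : forall c n, Qs c n <= 1.
Proof.
  intros c n. assert (H := Qs_tail c 0 n). simpl in H.
  assert (0 < (/4)^n) by (apply pow_lt; lra). lra.
Qed.

Definition Qval (c : nat -> bool) : R.
Proof.
  refine (proj1_sig (completeness (fun y => exists n, y = Qs c n) _ _)).
  - exists 1. intros y [n ->]. apply Qs_bound.
  - exists 0. exists 0%nat. reflexivity.
Defined.

Lemma Qval_spec : forall c, is_lub (fun y => exists n, y = Qs c n) (Qval c).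
Proof. intros c. unfold Qval. destruct completeness; simpl; auto. Qed.

Lemma least_nat : forall P : nat -> Prop, (exists n, P n) -> exists n, P n /\ forall m, (m < n)%nat -> ~ P m.
Proof.
  intros P [n Hn]. induction n as [n IH] using (well_founded_induction Wf_nat.lt_wf).
  destruct (classic (exists m, (m < n)%nat /\ P m)) as [[m [Hm Pm]] | Hno].
  - apply (IH m Hm Pm).
  - exists n. split; auto. intros m Hm Pm. apply Hno; eauto.
Qed.

Lemma Qval_lt : forall c c' k, (forall i, (i < k)%nat -> c i = c' i) -> c k = true -> c' k = false ->
  Qval c' < Qval c.
Proof.
  intros c c' k Hpre Hk Hk'.
  assert (Epre : Qs c k = Qs c' k).
  { assert (forall n, (n <= k)%nat -> Qs c n = Qs c' n).
    { induction n as [|n IH]; intros Hn; simpl; auto.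
      rewrite IH by lia. unfold tt4. rewrite Hpre by lia. auto. }
    auto. }
  destruct (Qval_spec c) as [U1 _]. destruct (Qval_spec c') as [_ L2].
  assert (H1 : Qs c (S k) <= Qval c) by (apply U1; eauto).
  simpl in H1. unfold tt4 in H1. rewrite Hk in H1.
  assert (H2 : Qval c' <= Qs c' k + (/3) * (/4) ^ (S k)).
  { apply L2. intros y [n ->].
    apply Rle_trans with (Qs c' (S k + n)).
    - replace (S k + n)%nat with (n + S k)%nat by lia. apply Qs_mono.
    - assert (H := Qs_tail c' (S k) n). simpl Qs in H at 2. unfold tt4 in H. rewrite Hk' in H.
      assert (0 < (/4)^n) by (apply pow_lt; lra). assert (0 < (/4)^(S k)) by (apply pow_lt; lra).
      nra. }
  assert (0 < (/4)^(S k)) by (apply pow_lt; lra). lra.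
Qed.

Lemma Qval_inj : forall c c', Qval c = Qval c' -> c = c'.
Proof.
  intros c c' E. apply NNPP. intro Ne.
  assert (Ex : exists k, c k <> c' k).
  { apply NNPP. intro H. apply Ne. apply functional_extensionality. intro k.
    apply NNPP. intro H'. apply H; eauto. }
  destruct (least_nat _ Ex) as [k [Hk Hmin]].
  assert (Hpre : forall i, (i < k)%nat -> c i = c' i).
  { intros i Hi. apply NNPP. apply Hmin; auto. }
  destruct (c k) eqn:E1; destruct (c' k) eqn:E2; try congruence.
  - assert (H := Qval_lt c c' k Hpre E1 E2). lra.
  - assert (H := Qval_lt c' c k ltac:(intros; symmetry; auto) E2 E1). lra.
Qed.

Definition bits (x : R) (k : nat) : bool := if Rlt_dec x (enum k) then true else false.

Lemma bits_inj : forall x y, bits x = bits y -> x = y.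
Proof.
  intros x y E. destruct (Rtotal_order x y) as [H|[H|H]]; auto; exfalso.
  - destruct (enum_dense x y H) as [k [H1 H2]].
    assert (E' := f_equal (fun f => f k) E). simpl in E'. unfold bits in E'.
    destruct (Rlt_dec x (enum k)); destruct (Rlt_dec y (enum k)); try discriminate; lra.
  - destruct (enum_dense y x H) as [k [H1 H2]].
    assert (E' := f_equal (fun f => f k) E). simpl in E'. unfold bits in E'.
    destruct (Rlt_dec x (enum k)); destruct (Rlt_dec y (enum k)); try discriminate; lra.
Qed.

Definition seq_code (s : nat -> R) : R :=
  Qval (fun n => let (i, k) := of_nat n in bits (s i) k).

Lemma seq_code_inj : forall s s', seq_code s = seq_code s' -> s = s'.
Proof.
  intros s s' E. apply Qval_inj in E. apply functional_extensionality. intro i.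
  apply bits_inj. apply functional_extensionality. intro k.
  assert (E' := f_equal (fun f => f (to_nat (i, k))) E). cbv beta in E'.
  rewrite cancel_of_to in E'. exact E'.
Qed.

Definition seq_dec (y : R) : nat -> R :=
  epsilon (inhabits (fun _ : nat => 0)) (fun s => seq_code s = y).

Lemma seq_dec_code : forall s, seq_dec (seq_code s) = s.
Proof.
  intros s. unfold seq_dec.
  assert (H := epsilon_spec (inhabits (fun _ : nat => 0)) (fun s' => seq_code s' = seq_code s)
    (ex_intro _ s eq_refl)).
  apply seq_code_inj; auto.
Qed.


Definition lsum (F : nat -> R) (l : list nat) : R := fold_right (fun i acc => F i + acc) 0 l.

Lemma sum_drop : forall (F : nat -> R) a N, (a <= N)%nat ->
  sum_f_R0 (fun i => if Nat.eqb i a then 0 else F i) N + F a = sum_f_R0 F N.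
Proof.
  intros F a N. induction N as [|N IH]; intros Ha.
  - assert (a = 0%nat) by lia. subst. simpl. ring.
  - cbn [sum_f_R0]. destruct (Nat.eq_dec a (S N)) as [E|E].
    + subst. rewrite Nat.eqb_refl.
      assert (Hs : sum_f_R0 (fun i => if Nat.eqb i (S N) then 0 else F i) N = sum_f_R0 F N).
      { apply sum_eq. intros i Hi. destruct (Nat.eqb_spec i (S N)); [lia|auto]. }
      rewrite Hs. ring.
    + destruct (Nat.eqb_spec (S N) a); [lia|]. rewrite <- IH by lia. ring.
Qed.

Lemma lsum_le_sum : forall l, NoDup l -> forall (F : nat -> R) N, (forall i, 0 <= F i) ->
  (forall i, In i l -> (i <= N)%nat) -> lsum F l <= sum_f_R0 F N.
Proof.
  induction l as [|a t IH]; intros Hnd F N HF Hb; simpl.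
  - apply cond_pos_sum; auto.
  - inversion Hnd as [|? ? Hnin Hnd']; subst.
    set (G := fun i => if Nat.eqb i a then 0 else F i).
    assert (E : lsum F t = lsum G t).
    { clear IH Hb Hnd. induction t as [|b t' IHt]; simpl; auto.
      unfold G at 1. destruct (Nat.eqb_spec b a).
      - subst. exfalso; apply Hnin; simpl; auto.
      - f_equal. apply IHt. intro; apply Hnin; simpl; auto. inversion Hnd'; auto. }
    rewrite E. rewrite <- (sum_drop F a N) by (apply Hb; simpl; auto).
    assert (lsum G t <= sum_f_R0 G N).
    { apply IH; auto. intro i; unfold G; destruct (Nat.eqb i a); auto; lra.
      intros; apply Hb; simpl; auto. }
    fold G. lra.
Qed.

Lemma lsum_app : forall F l1 l2, lsum F (l1 ++ l2) = lsum F l1 + lsum F l2.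
Proof. intros F l1 l2. induction l1; simpl; [ring|]. unfold lsum in *. rewrite IHl1; ring. Qed.

Lemma lsum_seq : forall F n, lsum F (seq 0 (S n)) = sum_f_R0 F n.
Proof.
  intros F n. induction n as [|n IH].
  - simpl. ring.
  - rewrite seq_S, lsum_app, IH. simpl. ring.
Qed.

Definition nullL (N : R -> Prop) : Prop :=
  forall eps, 0 < eps -> exists a b : nat -> R,
    (forall n, a n <= b n) /\
    (forall x, N x -> exists n, a n < x < b n) /\
    (forall l, NoDup l -> lsum (fun i => b i - a i) l <= eps).

Lemma list_bound : forall l : list nat, exists N, forall i, In i l -> (i <= N)%nat.
Proof.
  induction l as [|a t [N HN]]. exists 0%nat; simpl; tauto.
  exists (Nat.max a N). intros i [->|Hi]; [lia|]. specialize (HN i Hi); lia.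
Qed.

Lemma null_nullL : forall N, null_set N <-> nullL N.
Proof.
  intros N; split.
  - intros H eps Heps. destruct (H eps Heps) as [a [b [H1 [H2 H3]]]].
    exists a, b. repeat split; auto. intros l Hl.
    destruct (list_bound l) as [M HM].
    eapply Rle_trans; [apply lsum_le_sum; eauto|]. intro i; specialize (H1 i); lra. auto.
  - intros H eps Heps. destruct (H eps Heps) as [a [b [H1 [H2 H3]]]].
    exists a, b. repeat split; auto. intro n. rewrite <- lsum_seq. apply H3. apply seq_NoDup.
Qed.

Lemma null_sub : forall N M, (forall x, N x -> M x) -> null_set M -> null_set N.
Proof.
  intros N M H HM eps Heps. destruct (HM eps Heps) as [a [b [H1 [H2 H3]]]].
  exists a, b; repeat split; auto.
Qed.

Lemma geom_sum : forall N, sum_f_R0 (fun n => (/2) ^ (S (S n))) N = /2 - (/2) ^ (S (S N)).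
Proof.
  induction N as [|N IH]; simpl in *.
  - field.
  - rewrite IH. field.
Qed.

Lemma lsum_split : forall (F : nat -> R) (f : nat -> bool) l,
  lsum F l = lsum F (filter f l) + lsum F (filter (fun x => negb (f x)) l).
Proof.
  intros F f l. induction l as [|a t IH]; simpl; [ring|].
  destruct (f a); simpl; rewrite IH; ring.
Qed.

Lemma lsum_map : forall (F : nat -> R) (g : nat -> nat) l,
  lsum F (map g l) = lsum (fun i => F (g i)) l.
Proof. intros F g l. induction l; simpl; auto. rewrite IHl; auto. Qed.

Lemma filter_false : forall (f : nat -> bool) l, (forall k, In k l -> f k = false) -> filter f l = nil.
Proof. intros f l H. induction l; simpl; auto. rewrite H by (simpl; auto). apply IHl; intros; apply H; simpl; auto. Qed.

Lemma null_nat_union : forall SS : nat -> R -> Prop, (forall n, null_set (SS n)) ->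
  null_set (fun x => exists n, SS n x).
Proof.
  intros SS HS. apply null_nullL. intros eps Heps.
  assert (HS' : forall n, exists ab : (nat -> R) * (nat -> R),
     (forall m, fst ab m <= snd ab m) /\ (forall x, SS n x -> exists m, fst ab m < x < snd ab m) /\
     (forall l, NoDup l -> lsum (fun i => snd ab i - fst ab i) l <= eps * (/2) ^ (S (S n)))).
  { intro n. assert (Hn := proj1 (null_nullL (SS n)) (HS n) (eps * (/2) ^ (S (S n)))).
    destruct Hn as [a [b Hab]]. { apply Rmult_lt_0_compat; auto. apply pow_lt; lra. }
    exists (a, b); simpl; auto. }
  destruct (choice_tot _ _ _ HS') as [AB HAB].
  exists (fun k => fst (AB (fst (of_nat k))) (snd (of_nat k))),
         (fun k => snd (AB (fst (of_nat k))) (snd (of_nat k))).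
  repeat split.
  - intro k. apply (HAB _).
  - intros x [n Hx]. destruct (proj1 (proj2 (HAB n)) x Hx) as [m Hm].
    exists (to_nat (n, m)). rewrite cancel_of_to. simpl; auto.
  - intros l Hl.
    set (L := fun k => snd (AB (fst (of_nat k))) (snd (of_nat k)) - fst (AB (fst (of_nat k))) (snd (of_nat k))).
    assert (Gen : forall N l, NoDup l -> (forall k, In k l -> (fst (of_nat k) <= N)%nat) ->
       lsum L l <= eps * sum_f_R0 (fun n => (/2) ^ (S (S n))) N).
    { induction N as [|N IH]; intros l0 Hnd Hb.
      - rewrite (lsum_split L (fun k => Nat.eqb (fst (of_nat k)) 0) l0).
        rewrite (filter_false (fun x => negb (Nat.eqb (fst (of_nat x)) 0)) l0); [| intros k Hk; apply negb_false_iff;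
           apply Nat.eqb_eq; specialize (Hb k Hk); lia].
        simpl lsum at 2.
        set (l1 := filter (fun k => Nat.eqb (fst (of_nat k)) 0) l0).
        assert (E1 : lsum L l1 = lsum (fun m => snd (AB 0%nat) m - fst (AB 0%nat) m) (map (fun k => snd (of_nat k)) l1)).
        { rewrite lsum_map. unfold l1. clear. induction l0; simpl; auto.
          destruct (Nat.eqb_spec (fst (of_nat a)) 0); simpl; rewrite IHl0; auto.
          unfold L. rewrite e. auto. }
        assert (Hnd1 : NoDup (map (fun k => snd (of_nat k)) l1)).
        { apply Injective_map_NoDup_in.
          - intros k1 k2 H1 H2 E. unfold l1 in H1, H2. apply filter_In in H1, H2.
            destruct H1 as [_ H1], H2 as [_ H2]. apply Nat.eqb_eq in H1, H2.
            rewrite <- (cancel_to_of k1), <- (cancel_to_of k2).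
            destruct (of_nat k1), (of_nat k2). simpl in *. subst. auto.
          - apply NoDup_filter; auto. }
        assert (H := proj2 (proj2 (HAB 0%nat)) _ Hnd1). simpl in *. lra.
      - rewrite (lsum_split L (fun k => Nat.eqb (fst (of_nat k)) (S N)) l0).
        set (l1 := filter (fun k => Nat.eqb (fst (of_nat k)) (S N)) l0).
        assert (E1 : lsum L l1 = lsum (fun m => snd (AB (S N)) m - fst (AB (S N)) m) (map (fun k => snd (of_nat k)) l1)).
        { rewrite lsum_map. unfold l1. clear. induction l0; simpl; auto.
          destruct (Nat.eqb_spec (fst (of_nat a)) (S N)); simpl; rewrite IHl0; auto.
          unfold L. rewrite e. auto. }
        assert (Hnd1 : NoDup (map (fun k => snd (of_nat k)) l1)).
        { apply Injective_map_NoDup_in.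
          - intros k1 k2 H1 H2 E. unfold l1 in H1, H2. apply filter_In in H1, H2.
            destruct H1 as [_ H1], H2 as [_ H2]. apply Nat.eqb_eq in H1, H2.
            rewrite <- (cancel_to_of k1), <- (cancel_to_of k2).
            destruct (of_nat k1), (of_nat k2). simpl in *. subst. auto.
          - apply NoDup_filter; auto. }
        assert (H := proj2 (proj2 (HAB (S N))) _ Hnd1).
        assert (H2 : lsum L (filter (fun k => negb (Nat.eqb (fst (of_nat k)) (S N))) l0)
                   <= eps * sum_f_R0 (fun n => (/2) ^ (S (S n))) N).
        { apply IH. apply NoDup_filter; auto.
          intros k Hk. apply filter_In in Hk. destruct Hk as [Hk1 Hk2].
          apply negb_true_iff, Nat.eqb_neq in Hk2. specialize (Hb k Hk1). lia. }
        rewrite tech5. rewrite E1. lra. }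
    destruct (list_bound (map (fun k => fst (of_nat k)) l)) as [N HN].
    eapply Rle_trans. apply (Gen N l Hl). intros k Hk. apply HN. apply (in_map (fun k => fst (of_nat k))); auto.
    rewrite geom_sum. assert (0 < (/2) ^ (S (S N))) by (apply pow_lt; lra). nra.
Qed.

Lemma null_point : forall x0 (S : R -> Prop), (forall x, S x -> x = x0) -> null_set S.
Proof.
  intros x0 S H eps Heps.
  exists (fun n => match n with O => x0 - eps/4 | _ => 0 end),
         (fun n => match n with O => x0 + eps/4 | _ => 0 end).
  repeat split.
  - intros [|n]; lra.
  - intros x Hx. exists 0%nat. rewrite (H x Hx). lra.
  - intro n. induction n as [|n IH]; simpl in *; lra.
Qed.

Lemma null_subsingleton : forall S, (forall x y, S x -> S y -> x = y) -> null_set S.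
Proof.
  intros S H. destruct (classic (exists x, S x)) as [[x0 Hx0]|Hn].
  - apply (null_point x0). intros; apply H; auto.
  - apply (null_point 0). intros x Hx; exfalso; apply Hn; eauto.
Qed.

Lemma null_cnt : forall S, cnt S -> null_set S.
Proof.
  intros S [f Hf].
  apply null_sub with (M := fun x => exists n, (fun x => S x /\ f x = n) x).
  - intros x Hx; exists (f x); auto.
  - apply null_nat_union. intro n. apply null_subsingleton.
    intros x y [Hx Ex] [Hy Ey]. apply Hf; auto; congruence.
Qed.

Lemma null_union : forall I (J : I -> Prop) (S : I -> R -> Prop),
  cnt J -> (forall i, J i -> null_set (S i)) -> null_set (fun x => exists i, J i /\ S i x).
Proof.
  intros I J S [e He] HS.
  apply null_sub with (M := fun x => exists n, (fun x => exists i, J i /\ e i = n /\ S i x) x).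
  - intros x [i [Ji Si]]. exists (e i), i; auto.
  - apply null_nat_union. intro n.
    destruct (classic (exists i, J i /\ e i = n)) as [[i [Ji Ei]]|Hn].
    + apply null_sub with (M := S i); auto.
      intros x [i' [Ji' [Ei' Sx]]]. assert (i' = i) by (apply He; auto; congruence). subst; auto.
    + apply (null_point 0). intros x [i' [Ji' [Ei' _]]]. exfalso; apply Hn; eauto.
Qed.

Lemma null_union2 : forall S T, null_set S -> null_set T -> null_set (fun x => S x \/ T x).
Proof.
  intros S T HS HT.
  apply null_sub with (M := fun x => exists n, (if Nat.eqb n 0 then S else T) x).
  - intros x [H|H]; [exists 0%nat | exists 1%nat]; auto.
  - apply null_nat_union. intros [|n]; simpl; auto.
Qed.

Lemma null_reflect : forall p N, null_set N -> null_set (fun x => N (p - x)).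
Proof.
  intros p N HN eps Heps. destruct (HN eps Heps) as [a [b [H1 [H2 H3]]]].
  exists (fun n => p - b n), (fun n => p - a n). repeat split.
  - intro n; specialize (H1 n); lra.
  - intros x Hx. destruct (H2 _ Hx) as [n Hn]. exists n; lra.
  - intro n. eapply Rle_trans; [|apply (H3 n)]. right. apply sum_eq. intros; ring.
Qed.

Lemma finite_len : forall (a b : nat -> R), (forall n, a n <= b n) ->
  forall m l, (length l <= m)%nat -> NoDup l -> forall c d, c <= d ->
  (forall t, c <= t <= d -> exists i, In i l /\ a i < t < b i) ->
  lsum (fun i => b i - a i) l > d - c.
Proof.
  intros a b Hab m. induction m as [|m IH]; intros l Hlen Hnd c d Hcd Hcov.
  - destruct (Hcov c ltac:(lra)) as [i [Hi _]]. destruct l; simpl in *; [contradiction|lia].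
  - destruct (Hcov c ltac:(lra)) as [i [Hi Hci]].
    destruct (in_split _ _ Hi) as [l1 [l2 El]]. subst l.
    assert (Hnd' : NoDup (l1 ++ l2)) by (eapply NoDup_remove_1; eauto).
    assert (Hsplit : lsum (fun i => b i - a i) (l1 ++ i :: l2) =
              (b i - a i) + lsum (fun i => b i - a i) (l1 ++ l2)).
    { rewrite !lsum_app. simpl. ring. }
    assert (Hpos : forall l0, 0 <= lsum (fun i => b i - a i) l0).
    { induction l0; simpl; [lra|]. specialize (Hab a0). unfold lsum in *. lra. }
    rewrite Hsplit.
    destruct (Rlt_dec d (b i)) as [Hd|Hd].
    + specialize (Hpos (l1 ++ l2)). lra.
    + assert (IHc : lsum (fun i => b i - a i) (l1 ++ l2) > d - b i).
      { apply IH; auto.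
        - rewrite length_app in *; simpl in Hlen; lia.
        - lra.
        - intros t Ht. destruct (Hcov t ltac:(lra)) as [j [Hj Htj]].
          exists j. split; auto. apply in_app_or in Hj. destruct Hj as [Hj|[Hj|Hj]].
          + apply in_or_app; auto.
          + subst j. lra.
          + apply in_or_app; auto. }
      lra.
Qed.

Lemma unit_finite_cover : forall (a b : nat -> R), (forall t, exists n, a n < t < b n) ->
  exists N, forall t, 0 <= t <= 1 -> exists n, (n <= N)%nat /\ a n < t < b n.
Proof.
  intros a b Hcov.
  set (T := fun t => 0 <= t <= 1 /\ exists N, forall s, 0 <= s <= t -> exists n, (n <= N)%nat /\ a n < s < b n).
  assert (T0 : T 0).
  { split; [lra|]. destruct (Hcov 0) as [n0 Hn0]. exists n0. intros s Hs.
    assert (s = 0) by lra. subst. exists n0; split; auto. }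
  assert (Tb : bound T) by (exists 1; intros t [Ht _]; lra).
  destruct (completeness T Tb (ex_intro _ 0 T0)) as [m [Hub Hlub]].
  assert (Hm0 : 0 <= m) by (apply Hub; auto).
  assert (Hm1 : m <= 1) by (apply Hlub; intros t [Ht _]; lra).
  destruct (Hcov m) as [k Hk].
  assert (Ht : exists t, T t /\ a k < t).
  { apply NNPP. intro Hn. assert (m <= a k).
    { apply Hlub. intros t Tt. destruct (Rle_dec t (a k)); auto. exfalso; apply Hn.
      exists t; split; auto; lra. }
    lra. }
  destruct Ht as [t [[Ht01 [N HN]] Hta]].
  assert (Hext : forall s, 0 <= s <= 1 -> s < b k -> exists n, (n <= Nat.max N k)%nat /\ a n < s < b n).
  { intros s Hs Hsb. destruct (Rle_dec s t) as [Hst|Hst].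
    - destruct (HN s ltac:(lra)) as [n [Hn1 Hn2]]. exists n; split; auto; lia.
    - exists k. split; [lia|lra]. }
  destruct (Rlt_dec 1 (b k)) as [H1|H1].
  - exists (Nat.max N k). intros s Hs. apply Hext; auto; lra.
  - exfalso. set (u := (m + b k) / 2).
    assert (Tu : T u).
    { split; [unfold u; lra|]. exists (Nat.max N k). intros s Hs. apply Hext; unfold u in *; lra. }
    assert (u <= m) by (apply Hub; auto). unfold u in *; lra.
Qed.

Lemma R_not_null : ~ null_set (fun _ => True).
Proof.
  intro H. destruct (H (/2) ltac:(lra)) as [a [b [H1 [H2 H3]]]].
  destruct (unit_finite_cover a b) as [N HN]. { intro t; apply H2; auto. }
  specialize (H3 N).
  assert (lsum (fun i => b i - a i) (seq 0 (S N)) > 1 - 0).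
  { apply (finite_len a b H1 (S N)); auto. rewrite length_seq; lia. apply seq_NoDup. lra.
    intros t Ht. destruct (HN t Ht) as [n [Hn1 Hn2]]. exists n. split; auto.
    apply in_seq. lia. }
  rewrite lsum_seq in H0. lra.
Qed.


Lemma closure_mono : forall S T : R -> Prop, (forall x, S x -> T x) -> forall x, closure S x -> closure T x.
Proof.
  intros S T H x Hx eps Heps. destruct (Hx eps Heps) as [y [Sy Hy]]. exists y; auto.
Qed.

Lemma nd_sub : forall S T, (forall x, S x -> T x) -> nowhere_dense T -> nowhere_dense S.
Proof.
  intros S T H HT a b Hab. destruct (HT a b Hab) as [x [Hx Hc]].
  exists x; split; auto. intro C; apply Hc. eapply closure_mono; eauto.
Qed.

Lemma nd_point : forall x0, nowhere_dense (fun x => x = x0).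
Proof.
  intros x0 a b Hab.
  assert (Hx : exists x, a < x < b /\ x <> x0).
  { destruct (Req_dec ((a + b) / 2) x0) as [E|E].
    - exists ((a + (a + b)/2)/2). split; [lra|]. intro; lra.
    - exists ((a + b)/2); split; [lra|auto]. }
  destruct Hx as [x [Hx Ne]]. exists x; split; auto.
  intro C. destruct (C (Rabs (x - x0))) as [y [Ey Hy]].
  - apply Rabs_pos_lt; lra.
  - subst y. rewrite <- Rabs_Ropp in Hy. replace (- (x0 - x)) with (x - x0) in Hy by ring. lra.
Qed.

Lemma meager_sub : forall M M', (forall x, M x -> M' x) -> meager M' -> meager M.
Proof. intros M M' H [N [HN HC]]. exists N; split; auto. Qed.

Lemma meager_nat_union : forall M : nat -> R -> Prop, (forall n, meager (M n)) ->
  meager (fun x => exists n, M n x).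
Proof.
  intros M HM.
  destruct (choice_tot _ _ (fun n N => (forall k, nowhere_dense (N k)) /\ forall x, M n x -> exists k, N k x) HM)
    as [NN HNN].
  exists (fun j => NN (fst (of_nat j)) (snd (of_nat j))). split.
  - intro j. apply (HNN _).
  - intros x [n Hx]. destruct (proj2 (HNN n) x Hx) as [k Hk].
    exists (to_nat (n, k)). rewrite cancel_of_to. auto.
Qed.

Lemma meager_empty : forall M, (forall x, ~ M x) -> meager M.
Proof.
  intros M H. exists (fun _ x => x = 0). split.
  - intro; apply nd_point.
  - intros x Hx; exfalso; eapply H; eauto.
Qed.

Lemma meager_nd : forall N, nowhere_dense N -> meager N.
Proof. intros N H. exists (fun _ => N). split; auto. intros x Hx; exists 0%nat; auto. Qed.

Lemma meager_union : forall I (J : I -> Prop) (S : I -> R -> Prop),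
  cnt J -> (forall i, J i -> meager (S i)) -> meager (fun x => exists i, J i /\ S i x).
Proof.
  intros I J S [e He] HS.
  apply meager_sub with (M' := fun x => exists n, (fun x => exists i, J i /\ e i = n /\ S i x) x).
  - intros x [i [Ji Si]]. exists (e i), i; auto.
  - apply meager_nat_union. intro n.
    destruct (classic (exists i, J i /\ e i = n)) as [[i [Ji Ei]]|Hn].
    + apply meager_sub with (M' := S i); auto.
      intros x [i' [Ji' [Ei' Sx]]]. assert (i' = i) by (apply He; auto; congruence). subst; auto.
    + apply meager_empty. intros x [i' [Ji' [Ei' _]]]. apply Hn; eauto.
Qed.

Lemma meager_union2 : forall S T, meager S -> meager T -> meager (fun x => S x \/ T x).
Proof.
  intros S T HS HT.
  apply meager_sub with (M' := fun x => exists n, (if Nat.eqb n 0 then S else T) x).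
  - intros x [H|H]; [exists 0%nat | exists 1%nat]; auto.
  - apply meager_nat_union. intros [|n]; simpl; auto.
Qed.

Lemma meager_cnt : forall S, cnt S -> meager S.
Proof.
  intros S [f Hf].
  apply meager_sub with (M' := fun x => exists n, (fun x => S x /\ f x = n) x).
  - intros x Hx; exists (f x); auto.
  - apply meager_nat_union. intro n.
    destruct (classic (exists x, S x /\ f x = n)) as [[x0 [Sx0 E0]]|Hn].
    + apply meager_nd. apply nd_sub with (T := fun x => x = x0); [|apply nd_point].
      intros x [Sx Ex]. apply Hf; auto; congruence.
    + apply meager_empty. intros x Hx; apply Hn; eauto.
Qed.

Lemma baire_step : forall N, nowhere_dense N -> forall a b, a < b ->
  exists a' b', a < a' /\ a' < b' /\ b' < b /\ forall y, a' <= y <= b' -> ~ N y.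
Proof.
  intros N HN a b Hab. destruct (HN a b Hab) as [x [Hx Hc]].
  assert (He : exists eps, 0 < eps /\ forall y, N y -> ~ Rabs (y - x) < eps).
  { apply NNPP. intro H. apply Hc. intros eps Heps. apply NNPP. intro H2.
    apply H. exists eps. split; auto. intros y Ny Hy. apply H2. exists y; auto. }
  destruct He as [eps [Heps He]].
  set (r := Rmin eps (Rmin (x - a) (b - x)) / 2).
  assert (Hr1 : Rmin eps (Rmin (x - a) (b - x)) <= eps) by apply Rmin_l.
  assert (Hr2 : Rmin eps (Rmin (x - a) (b - x)) <= x - a)
    by (eapply Rle_trans; [apply Rmin_r | apply Rmin_l]).
  assert (Hr3 : Rmin eps (Rmin (x - a) (b - x)) <= b - x)
    by (eapply Rle_trans; [apply Rmin_r | apply Rmin_r]).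
  assert (Hr0 : 0 < Rmin eps (Rmin (x - a) (b - x)))
    by (apply Rmin_glb_lt; auto; apply Rmin_glb_lt; lra).
  exists (x - r), (x + r). unfold r. repeat split; try lra.
  intros y Hy Ny. apply (He y Ny). apply Rabs_def1; lra.
Qed.

Lemma R_not_meager : ~ meager (fun _ => True).
Proof.
  intros [N [HN HC]].
  assert (Hst : forall np : nat * (R * R), exists q : R * R,
     fst (snd np) < snd (snd np) ->
     fst (snd np) < fst q /\ fst q < snd q /\ snd q < snd (snd np) /\
     forall y, fst q <= y <= snd q -> ~ N (fst np) y).
  { intros [n [a b]]. simpl. destruct (Rlt_dec a b) as [H|H].
    - destruct (baire_step (N n) (HN n) a b H) as [a' [b' Hab]]. exists (a', b'); auto.
    - exists (0, 0); intro; contradiction. }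
  destruct (choice_tot _ _ _ Hst) as [st Hst'].
  set (I := fix I n := match n with O => (0, 1) | S m => st (m, I m) end).
  assert (Hinv : forall n, fst (I n) < snd (I n)).
  { induction n as [|n IH]; simpl; [lra|]. destruct (Hst' (n, I n)) as [H1 [H2 _]]; simpl; auto. }
  assert (Hstep : forall n, fst (I n) < fst (I (S n)) /\ snd (I (S n)) < snd (I n) /\
            forall y, fst (I (S n)) <= y <= snd (I (S n)) -> ~ N n y).
  { intro n. change (I (S n)) with (st (n, I n)).
    destruct (Hst' (n, I n)) as [H1 [H2 [H3 H4]]]; simpl; auto. }
  assert (Hmon : forall n k : nat, fst (I n) <= fst (I (n + k)%nat) /\ snd (I (n + k)%nat) <= snd (I n)).
  { intros n k. induction k as [|k IH]; [rewrite Nat.add_0_r; lra|].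
    rewrite Nat.add_succ_r. destruct (Hstep (n + k)%nat) as [H1 [H2 _]]. lra. }
  assert (Hab : forall n m, fst (I n) <= snd (I m)).
  { intros n m. destruct (Nat.le_ge_cases n m) as [Hnm|Hnm].
    - destruct (Hmon n (m - n)%nat) as [A1 A2].
      replace (n + (m - n))%nat with m in A1, A2 by lia.
      assert (H := Hinv m). lra.
    - destruct (Hmon m (n - m)%nat) as [A1 A2].
      replace (m + (n - m))%nat with n in A1, A2 by lia.
      assert (H := Hinv n). lra. }
  set (E := fun y => exists n, y = fst (I n)).
  assert (Eb : bound E) by (exists (snd (I 0%nat)); intros y [n ->]; apply Hab).
  destruct (completeness E Eb (ex_intro _ (fst (I 0%nat)) (ex_intro _ 0%nat eq_refl))) as [x [Hub Hlub]].
  destruct (HC x Logic.I) as [n Hn].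
  apply (proj2 (proj2 (Hstep n)) x); auto. split.
  - apply Hub. exists (S n); auto.
  - apply Hlub. intros y [m ->]. apply Hab.
Qed.

Lemma R_not_cnt : ~ cnt (fun _ : R => True).
Proof. intro H. apply R_not_meager. apply meager_cnt; auto. Qed.


Definition inIvl (k : nat) (x : R) : Prop := enum (fst (of_nat k)) < x < enum (snd (of_nat k)).

Lemma ivl_small : forall x eps, 0 < eps -> exists k, inIvl k x /\ forall y, inIvl k y -> Rabs (y - x) < eps.
Proof.
  intros x eps He.
  destruct (enum_dense (x - eps) x ltac:(lra)) as [i Hi].
  destruct (enum_dense x (x + eps) ltac:(lra)) as [j Hj].
  exists (to_nat (i, j)). unfold inIvl. rewrite cancel_of_to. simpl. split; [lra|].
  intros y Hy. apply Rabs_def1; lra.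
Qed.

Lemma ivl_open : forall k x, inIvl k x -> exists eps, 0 < eps /\ forall y, Rabs (y - x) < eps -> inIvl k y.
Proof.
  intros k x H. unfold inIvl in *.
  exists (Rmin (x - enum (fst (of_nat k))) (enum (snd (of_nat k)) - x)).
  split. apply Rmin_glb_lt; lra.
  intros y Hy. assert (H1 := Rmin_l (x - enum (fst (of_nat k))) (enum (snd (of_nat k)) - x)).
  assert (H2 := Rmin_r (x - enum (fst (of_nat k))) (enum (snd (of_nat k)) - x)).
  apply Rabs_def2 in Hy. lra.
Qed.

Inductive bcode : Type :=
  | BOpen : (nat -> bool) -> bcode
  | BCompl : bcode -> bcode
  | BUnion : (nat -> bcode) -> bcode.

Fixpoint interp (c : bcode) : R -> Prop :=
  match c with
  | BOpen b => fun x => exists k, b k = true /\ inIvl k x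
  | BCompl c' => fun x => ~ interp c' x
  | BUnion cs => fun x => exists n, interp (cs n) x
  end.

Lemma borel_code : forall B, borel B -> exists c, forall x, interp c x <-> B x.
Proof.
  intros B HB. induction HB as [U HU | S HS IH | Sn HSn IH | S T HS IH HST].
  - exists (BOpen (fun k => if excluded_middle_informative (forall y, inIvl k y -> U y) then true else false)).
    intro x. simpl. split.
    + intros [k [Hk Hx]]. destruct excluded_middle_informative; [auto|discriminate].
    + intro Ux. destruct (HU x Ux) as [eps [He Hball]].
      destruct (ivl_small x eps He) as [k [Hk Hk']]. exists k. split; auto.
      destruct excluded_middle_informative as [_|n]; [reflexivity|].
      exfalso; apply n. intros y Hy. apply Hball. apply Hk'; auto.
  - destruct IH as [c Hc]. exists (BCompl c). intro x. simpl. specialize (Hc x). tauto.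
  - destruct (choice_tot _ _ _ IH) as [cs Hcs]. exists (BUnion cs). intro x. simpl.
    split; intros [n Hn]; exists n; apply Hcs; auto.
  - destruct IH as [c Hc]. exists c. intro x. rewrite Hc. auto.
Qed.

Fixpoint tree (c : bcode) (l : list nat) : nat :=
  match c, l with
  | BOpen b, nil => 0%nat
  | BOpen b, n :: _ => if b n then 1%nat else 0%nat
  | BCompl _, nil => 1%nat
  | BCompl c', _ :: l' => tree c' l'
  | BUnion _, nil => 2%nat
  | BUnion cs, n :: l' => tree (cs n) l'
  end.

Lemma tree_inj : forall c c', (forall l, tree c l = tree c' l) -> c = c'.
Proof.
  induction c as [b | c IH | cs IH]; intros [b' | c' | cs'] H;
    try (specialize (H nil); simpl in H; discriminate).
  - f_equal. apply functional_extensionality. intro n. specialize (H (n :: nil)). simpl in H.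
    destruct (b n), (b' n); auto; discriminate.
  - f_equal. apply IH. intro l. apply (H (0%nat :: l)).
  - f_equal. apply functional_extensionality. intro n. apply IH. intro l. apply (H (n :: l)).
Qed.

Definition listdec (n : nat) : list nat := epsilon (inhabits nil) (fun l => enc_list l = n).

Lemma listdec_enc : forall l, listdec (enc_list l) = l.
Proof.
  intro l. unfold listdec. apply enc_list_inj.
  apply (epsilon_spec (inhabits nil) (fun l' => enc_list l' = enc_list l)). eauto.
Qed.

Definition bcode_seq (c : bcode) : nat -> R := fun n => INR (tree c (listdec n)).

Lemma bcode_seq_inj : forall c c', bcode_seq c = bcode_seq c' -> c = c'.
Proof.
  intros c c' E. apply tree_inj. intro l.
  assert (E' := f_equal (fun f => f (enc_list l)) E). simpl in E'. unfold bcode_seq in E'.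
  rewrite listdec_enc in E'. apply INR_eq; auto.
Qed.

Definition bdec (s : nat -> R) : bcode := epsilon (inhabits (BOpen (fun _ => false))) (fun c => bcode_seq c = s).
Definition BBc (s : nat -> R) : R -> Prop := interp (bdec s).

Lemma BBc_cofinal : forall B, borel B -> exists s, forall x, BBc s x <-> B x.
Proof.
  intros B HB. destruct (borel_code B HB) as [c Hc]. exists (bcode_seq c).
  unfold BBc. assert (E : bdec (bcode_seq c) = c).
  { apply bcode_seq_inj. unfold bdec.
    apply (epsilon_spec (inhabits (BOpen (fun _ => false))) (fun c' => bcode_seq c' = bcode_seq c)). eauto. }
  rewrite E. auto.
Qed.

Definition Fc (s : nat -> R) (n : nat) : R -> Prop :=
  fun x => ~ exists k, s (to_nat (n, k)) = 1 /\ inIvl k x.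
Definition Mc (s : nat -> R) : R -> Prop :=
  fun x => exists n, nowhere_dense (Fc s n) /\ Fc s n x.

Lemma Mc_meager : forall s, meager (Mc s).
Proof.
  intro s. exists (fun n x => nowhere_dense (Fc s n) /\ Fc s n x). split.
  - intro n. destruct (classic (nowhere_dense (Fc s n))) as [H|H].
    + apply nd_sub with (T := Fc s n); auto. intros x [_ Hx]; auto.
    + apply nd_sub with (T := fun x => x = 0); [|apply nd_point]. intros x [Hx _]; contradiction.
  - intros x Hx; exact Hx.
Qed.

Lemma Mc_cofinal : forall M, meager M -> exists s, forall x, M x -> Mc s x.
Proof.
  intros M [N [HN HC]].
  exists (fun j => let (n, k) := of_nat j in
          if excluded_middle_informative (forall y, inIvl k y -> ~ closure (N n) y) then 1 else 0).
  assert (Hs : forall n k, (let (n, k) := of_nat (to_nat (n, k)) in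
          if excluded_middle_informative (forall y, inIvl k y -> ~ closure (N n) y) then 1 else 0) = 1 <->
          forall y, inIvl k y -> ~ closure (N n) y).
  { intros n k. rewrite cancel_of_to. destruct excluded_middle_informative; split; auto; intro; try contradiction; lra. }
  intros x Mx. destruct (HC x Mx) as [n Hn]. exists n. split.
  - intros a b Hab. destruct (HN n a b Hab) as [x0 [Hx0 Hc]].
    assert (He : exists eps, 0 < eps /\ forall y, N n y -> ~ Rabs (y - x0) < eps).
    { apply NNPP. intro H. apply Hc. intros eps Heps. apply NNPP. intro H2.
      apply H. exists eps. split; auto. intros y Ny Hy. apply H2. exists y; auto. }
    destruct He as [eps [Heps He]].
    destruct (ivl_small x0 (eps/2) ltac:(lra)) as [k [Hk Hk']].
    exists x0. split; auto. intro Hcl.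
    destruct (ivl_open k x0 Hk) as [e2 [He2 Hball]].
    destruct (Hcl e2 He2) as [z [Fz Hz]]. apply Fz. exists k. split; [|apply Hball; auto].
    apply Hs. intros y Hy Cy. destruct (Cy (eps/2) ltac:(lra)) as [w [Nw Hw]].
    apply (He w Nw). specialize (Hk' y Hy).
    replace (w - x0) with ((w - y) + (y - x0)) by ring.
    eapply Rle_lt_trans; [apply Rabs_triang|]. lra.
  - intros [k [Hk Hx]]. assert (Hk2 := proj1 (Hs n k) Hk). apply (Hk2 x Hx). intros eps Heps. exists x. split; auto.
    replace (x - x) with 0 by ring. rewrite Rabs_R0; auto.
Qed.

Definition na (s : nat -> R) (m i : nat) : R := s (to_nat (m, to_nat (0%nat, i))).
Definition nb (s : nat -> R) (m i : nat) : R := s (to_nat (m, to_nat (1%nat, i))).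
Definition validN (s : nat -> R) : Prop :=
  forall m, (forall i, na s m i <= nb s m i) /\ forall n, sum_f_R0 (fun i => nb s m i - na s m i) n <= / INR (S m).
Definition Nc (s : nat -> R) : R -> Prop :=
  fun x => validN s /\ forall m, exists i, na s m i < x < nb s m i.

Lemma Nc_null : forall s, null_set (Nc s).
Proof.
  intro s. destruct (classic (validN s)) as [V|V].
  - intros eps Heps. destruct (archimed (/ eps)) as [H1 _].
    set (m := Z.to_nat (up (/ eps))).
    assert (Hm : / INR (S m) <= eps).
    { assert (0 < / eps) by (apply Rinv_0_lt_compat; auto).
      assert (Hup : (0 < up (/ eps))%Z) by (apply lt_IZR; simpl; lra).
      assert (INR m = IZR (up (/ eps))) by (unfold m; rewrite INR_IZR_INZ, Z2Nat.id; auto; lia).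
      rewrite S_INR. rewrite <- (Rinv_inv eps). apply Rinv_le_contravar; [auto|]. lra. }
    exists (na s m), (nb s m). repeat split.
    + apply (V m).
    + intros x [_ Hx]. apply Hx.
    + intro n. eapply Rle_trans; [apply (V m)|auto].
  - apply (null_point 0). intros x [Hx _]; contradiction.
Qed.

Lemma Nc_cofinal : forall N, null_set N -> exists s, forall x, N x -> Nc s x.
Proof.
  intros N HN.
  assert (H : forall m : nat, exists ab : (nat -> R) * (nat -> R),
    (forall i, fst ab i <= snd ab i) /\ (forall x, N x -> exists i, fst ab i < x < snd ab i) /\
    (forall n, sum_f_R0 (fun i => snd ab i - fst ab i) n <= / INR (S m))).
  { intro m. destruct (HN (/ INR (S m))) as [a [b Hab]].
    - apply Rinv_0_lt_compat, lt_0_INR; lia.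
    - exists (a, b); auto. }
  destruct (choice_tot _ _ _ H) as [AB HAB].
  exists (fun j => let (m, r) := of_nat j in let (t, i) := of_nat r in
          if Nat.eqb t 0 then fst (AB m) i else if Nat.eqb t 1 then snd (AB m) i else 0).
  assert (Ena : forall m i, na (fun j => let (m, r) := of_nat j in let (t, i) := of_nat r in
          if Nat.eqb t 0 then fst (AB m) i else if Nat.eqb t 1 then snd (AB m) i else 0) m i = fst (AB m) i).
  { intros m i. unfold na. rewrite !cancel_of_to. auto. }
  assert (Enb : forall m i, nb (fun j => let (m, r) := of_nat j in let (t, i) := of_nat r in
          if Nat.eqb t 0 then fst (AB m) i else if Nat.eqb t 1 then snd (AB m) i else 0) m i = snd (AB m) i).
  { intros m i. unfold nb. rewrite !cancel_of_to. auto. }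
  intros x Nx. split.
  - intro m. rewrite (functional_extensionality _ _ (Ena m)), (functional_extensionality _ _ (Enb m)).
    split; apply (HAB m).
  - intro m. rewrite (functional_extensionality _ _ (Ena m)), (functional_extensionality _ _ (Enb m)).
    apply (HAB m); auto.
Qed.


Definition fc (f : R -> R) : nat -> R := fun n => f (enum n).

Definition Pinc (f : R -> R) (s : nat -> R) : Prop :=
  strictly_increasing f /\
  ((exists g, strictly_increasing g /\ continuity g /\ fc g = s) -> continuity f /\ fc f = s).
Definition Pdec (f : R -> R) (s : nat -> R) : Prop :=
  strictly_decreasing f /\
  ((exists g, strictly_decreasing g /\ continuity g /\ fc g = s) -> continuity f /\ fc f = s).

Definition decF (s : nat -> R) : R -> R := epsilon (inhabits (fun x => x)) (fun f => Pinc f s).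
Definition decG (s : nat -> R) : R -> R := epsilon (inhabits (fun x => x)) (fun f => Pdec f s).

Lemma decF_spec : forall s, Pinc (decF s) s.
Proof.
  intro s. unfold decF. apply epsilon_spec.
  destruct (classic (exists g, strictly_increasing g /\ continuity g /\ fc g = s)) as [[g Hg]|Hn].
  - exists g. split; [apply Hg|]. intros _; split; apply Hg.
  - exists (fun x => x). split; [intros x y H; auto|]. intro H; contradiction.
Qed.

Lemma decG_spec : forall s, Pdec (decG s) s.
Proof.
  intro s. unfold decG. apply epsilon_spec.
  destruct (classic (exists g, strictly_decreasing g /\ continuity g /\ fc g = s)) as [[g Hg]|Hn].
  - exists g. split; [apply Hg|]. intros _; split; apply Hg.
  - exists (fun x => - x). split; [intros x y H; lra|]. intro H; contradiction.
Qed.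

Lemma decF_code : forall f, strictly_increasing f -> continuity f -> decF (fc f) = f.
Proof.
  intros f Hi Hc. destruct (decF_spec (fc f)) as [_ H].
  destruct H as [H1 H2]. { exists f; auto. }
  apply cont_determined; auto. intro n. apply (f_equal (fun s => s n)) in H2. exact H2.
Qed.

Lemma decG_code : forall f, strictly_decreasing f -> continuity f -> decG (fc f) = f.
Proof.
  intros f Hi Hc. destruct (decG_spec (fc f)) as [_ H].
  destruct H as [H1 H2]. { exists f; auto. }
  apply cont_determined; auto. intro n. apply (f_equal (fun s => s n)) in H2. exact H2.
Qed.

Definition cmpt (j : nat) (a : R) : nat -> R := fun n => seq_dec a (to_nat (j, n)).

Lemma comp_surj : forall (r t : R) (s1 s2 s3 s4 s5 : nat -> R) (v : R2),
  exists a, cmpt 0 a 0%nat = r /\ cmpt 1 a = s1 /\ cmpt 2 a = s2 /\ cmpt 3 a = s3 /\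
    cmpt 4 a = s4 /\ cmpt 5 a = s5 /\ cmpt 6 a 0%nat = fst v /\ cmpt 6 a 1%nat = snd v /\
    cmpt 7 a 0%nat = t.
Proof.
  intros r t s1 s2 s3 s4 s5 v.
  set (m := fun n => let (j, k) := of_nat n in
     match j with
     | 0%nat => r | 1%nat => s1 k | 2%nat => s2 k | 3%nat => s3 k | 4%nat => s4 k | 5%nat => s5 k
     | 6%nat => if Nat.eqb k 0 then fst v else snd v
     | _ => t end).
  exists (seq_code m).
  assert (E : forall j n, cmpt j (seq_code m) n = m (to_nat (j, n))).
  { intros j n. unfold cmpt. rewrite seq_dec_code. auto. }
  repeat split; try (apply functional_extensionality; intro n); rewrite E; unfold m; rewrite cancel_of_to; auto.
Qed.

Lemma fiber_uncnt : forall (r : R) (s1 s2 s3 s4 s5 : nat -> R) (v : R2),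
  ~ cnt (fun a => cmpt 0 a 0%nat = r /\ cmpt 1 a = s1 /\ cmpt 2 a = s2 /\ cmpt 3 a = s3 /\
    cmpt 4 a = s4 /\ cmpt 5 a = s5 /\ cmpt 6 a 0%nat = fst v /\ cmpt 6 a 1%nat = snd v).
Proof.
  intros r s1 s2 s3 s4 s5 v H. apply R_not_cnt.
  apply (cnt_image _ _ _ _ (fun a => cmpt 7 a 0%nat) H).
  intros t _. destruct (comp_surj r t s1 s2 s3 s4 s5 v) as [a Ha].
  exists a. repeat split; apply Ha.
Qed.


Lemma omega1_order : CH -> exists prec : R -> R -> Prop,
  well_founded prec /\ (forall a b c, prec a b -> prec b c -> prec a c) /\
  (forall a b, a <> b -> prec a b \/ prec b a) /\ (forall a, ~ prec a a) /\
  (forall a, cnt (fun b => prec b a)).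
Proof.
  intro HCH. destruct wo_exists as [W [Hmin Hanti]].
  assert (Hrefl : forall x, W x x).
  { intro x. destruct (Hmin (fun y => y = x) (ex_intro _ x eq_refl)) as [m [Em Hm]].
    subst; auto. }
  assert (Htot : forall x y, W x y \/ W y x).
  { intros x y. destruct (Hmin (fun z => z = x \/ z = y) (ex_intro _ x (or_introl eq_refl))) as [m [[Em|Em] Hm]];
      subst; [left|right]; apply Hm; auto. }
  assert (Htrans : forall x y z, W x y -> W y z -> W x z).
  { intros x y z Hxy Hyz.
    destruct (Hmin (fun w => w = x \/ w = y \/ w = z) (ex_intro _ x (or_introl eq_refl))) as [m [Em Hm]].
    destruct Em as [ -> | [ -> | -> ] ].
    - apply Hm; tauto.
    - assert (x = y) by (apply Hanti; [exact Hxy | apply Hm; tauto]). subst; exact Hyz.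
    - assert (y = z) by (apply Hanti; [exact Hyz | apply Hm; tauto]). subst; exact Hxy. }
  set (lt := fun x y => W x y /\ x <> y).
  assert (Hwf : well_founded lt).
  { intro x. apply NNPP. intro Hx.
    destruct (Hmin (fun y => ~ Acc lt y) (ex_intro _ x Hx)) as [m [Hm Hmm]].
    apply Hm. constructor. intros y [Wy Ne]. apply NNPP. intro Hy.
    apply Ne. apply Hanti; auto. }
  assert (Hlt_trans : forall a b c, lt a b -> lt b c -> lt a c).
  { intros a b c [H1 N1] [H2 N2]. split; [eapply Htrans; eauto|].
    intro E; subst. apply N1. apply Hanti; auto. }
  assert (Hlt_tot : forall a b, a <> b -> lt a b \/ lt b a).
  { intros a b Ne. destruct (Htot a b); [left|right]; split; auto. }
  destruct (classic (forall x, cnt (fun y => lt y x))) as [Hall|Hex].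
  - exists lt. split; [exact Hwf|]. split; [exact Hlt_trans|]. split; [exact Hlt_tot|].
    split; [intros a [_ N]; auto | exact Hall].
  - apply not_all_ex_not in Hex.
    destruct (Hmin (fun x => ~ cnt (fun y => lt y x)) Hex) as [x0 [Hx0 Hmin0]].
    destruct (HCH (fun y => lt y x0)) as [Hc | [phi [Hphi1 [Hphi2 Hphi3]]]].
    { contradiction. }
    exists (fun a b => lt (phi a) (phi b)). split; [|split; [|split; [|split]]].
    + apply wf_inverse_image; auto.
    + intros a b c; apply Hlt_trans.
    + intros a b Ne. apply Hlt_tot. intro E; apply Ne; auto.
    + intros a [_ N]; auto.
    + intro a. assert (Hseg : cnt (fun y => lt y (phi a))).
      { apply NNPP. intro Hn. specialize (Hmin0 _ Hn). destruct (Hphi1 a) as [_ Ne].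
        apply Ne. apply Hanti; auto. apply (Hphi1 a). }
      destruct Hseg as [f Hf]. exists (fun b => f (phi b)). intros b c Hb Hc E.
      apply Hphi2. apply Hf; auto.
Qed.


Definition tagv (a : R) : R := cmpt 0 a 0%nat.
Definition FF (a : R) : R -> R := decF (cmpt 1 a).
Definition GG (a : R) : R -> R := decG (cmpt 2 a).
Definition MM (a : R) : R -> Prop := Mc (cmpt 3 a).
Definition NN (a : R) : R -> Prop := Nc (cmpt 4 a).
Definition BB (a : R) : R -> Prop := BBc (cmpt 5 a).
Definition VV (a : R) : R2 := (cmpt 6 a 0%nat, cmpt 6 a 1%nat).

Definition Avoid (prec : R -> R -> Prop) (a : R) (p : R2) : Prop :=
  forall c, prec c a -> (~ MM c (fst p) \/ FF c (fst p) <> snd p) /\ (~ NN c (fst p) \/ GG c (fst p) <> snd p).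

Definition Good0 prec a (P : R2 -> Prop) x :=
  BB a x /\ Avoid prec a (x, FF a x) /\ ~ span P (x, FF a x).
Definition Good1 prec a (P : R2 -> Prop) x :=
  BB a x /\ Avoid prec a (x, GG a x) /\ ~ span P (x, GG a x).
Definition bpt (a : R) (x : R) : R2 := (fst (VV a) - x, snd (VV a) + x).
Definition Good2 prec a (P : R2 -> Prop) x :=
  Avoid prec a (x, - x) /\ Avoid prec a (bpt a x) /\ ~ span P (x, - x) /\
  ~ span (fun p => P p \/ p = (x, - x)) (bpt a x).

Definition pickx (Q : R -> Prop) : option R :=
  match excluded_middle_informative (exists x, Q x) with
  | left H => Some (proj1_sig (constructive_indefinite_description _ H))
  | right _ => None
  end.

Lemma pickx_some : forall Q x, pickx Q = Some x -> Q x.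
Proof.
  intros Q x. unfold pickx. destruct excluded_middle_informative as [H|H]; [|discriminate].
  intro E; injection E as <-. apply proj2_sig.
Qed.

Lemma pickx_ex : forall Q, (exists x, Q x) -> exists x, pickx Q = Some x.
Proof.
  intros Q H. unfold pickx. destruct excluded_middle_informative as [H'|H']; [eauto|contradiction].
Qed.

Definition step (prec : R -> R -> Prop) (a : R) (P : R2 -> Prop) : option R2 * option R2 :=
  if Req_EM_T (tagv a) 0 then
    match pickx (Good0 prec a P) with Some x => (Some (x, FF a x), None) | None => (None, None) end
  else if Req_EM_T (tagv a) 1 then
    match pickx (Good1 prec a P) with Some x => (Some (x, GG a x), None) | None => (None, None) end
  else if Req_EM_T (tagv a) 2 then
    if excluded_middle_informative (span P (VV a)) then (None, None) else
    match pickx (Good2 prec a P) with Some x => (Some (x, - x), Some (bpt a x)) | None => (None, None) end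
  else (None, None).

Definition Out (prec : R -> R -> Prop) (Hwf : well_founded prec) : R -> option R2 * option R2 :=
  Fix Hwf (fun _ => (option R2 * option R2)%type)
    (fun a rec => step prec a (fun p => exists b (h : prec b a), fst (rec b h) = Some p \/ snd (rec b h) = Some p)).

Definition Prev prec Hwf (a : R) : R2 -> Prop :=
  fun p => exists b, prec b a /\ (fst (Out prec Hwf b) = Some p \/ snd (Out prec Hwf b) = Some p).

Lemma Out_eq : forall prec Hwf a, Out prec Hwf a = step prec a (Prev prec Hwf a).
Proof.
  intros prec Hwf a. unfold Out at 1. rewrite Fix_eq.
  - f_equal. apply functional_extensionality. intro p. apply propositional_extensionality.
    unfold Prev. split.
    + intros [b [h H]]. exists b; split; auto.
    + intros [b [h H]]. exists b, h. auto.
  - intros x f g Hfg. f_equal. apply functional_extensionality. intro p.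
    apply propositional_extensionality. split; intros [b [h H]]; exists b, h;
      rewrite ?Hfg in *; rewrite <- ?Hfg in *; auto.
Qed.

Definition inOut prec Hwf (a : R) (p : R2) : Prop :=
  fst (Out prec Hwf a) = Some p \/ snd (Out prec Hwf a) = Some p.

Lemma Out_avoid : forall prec Hwf a p, inOut prec Hwf a p -> Avoid prec a p.
Proof.
  intros prec Hwf a p H. unfold inOut in H. rewrite Out_eq in H. unfold step in H.
  destruct (Req_EM_T (tagv a) 0).
  { destruct (pickx _) as [x|] eqn:Ep; simpl in H; destruct H as [H|H]; try discriminate.
    injection H as <-. apply pickx_some in Ep. apply Ep. }
  destruct (Req_EM_T (tagv a) 1).
  { destruct (pickx _) as [x|] eqn:Ep; simpl in H; destruct H as [H|H]; try discriminate.
    injection H as <-. apply pickx_some in Ep. apply Ep. }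
  destruct (Req_EM_T (tagv a) 2); [|simpl in H; destruct H; discriminate].
  destruct excluded_middle_informative; [simpl in H; destruct H; discriminate|].
  destruct (pickx _) as [x|] eqn:Ep; simpl in H; destruct H as [H|H]; try discriminate;
    injection H as <-; apply pickx_some in Ep; apply Ep.
Qed.

Lemma Out_cases : forall prec Hwf a,
  Out prec Hwf a = (None, None) \/
  (exists x, Out prec Hwf a = (Some (x, FF a x), None) /\ Good0 prec a (Prev prec Hwf a) x) \/
  (exists x, Out prec Hwf a = (Some (x, GG a x), None) /\ Good1 prec a (Prev prec Hwf a) x) \/
  (exists x, Out prec Hwf a = (Some (x, - x), Some (bpt a x)) /\ Good2 prec a (Prev prec Hwf a) x).
Proof.
  intros prec Hwf a. rewrite Out_eq. unfold step.
  destruct (Req_EM_T (tagv a) 0).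
  { destruct (pickx _) as [x|] eqn:Ep; auto. apply pickx_some in Ep. right; left; eauto. }
  destruct (Req_EM_T (tagv a) 1).
  { destruct (pickx _) as [x|] eqn:Ep; auto. apply pickx_some in Ep. right; right; left; eauto. }
  destruct (Req_EM_T (tagv a) 2); auto.
  destruct excluded_middle_informative; auto.
  destruct (pickx _) as [x|] eqn:Ep; auto. apply pickx_some in Ep. right; right; right; eauto.
Qed.

Lemma Out_tag0 : forall prec Hwf a, tagv a = 0 -> (exists x, Good0 prec a (Prev prec Hwf a) x) ->
  exists x, Out prec Hwf a = (Some (x, FF a x), None) /\ Good0 prec a (Prev prec Hwf a) x.
Proof.
  intros prec Hwf a Ht Hx. rewrite Out_eq. unfold step.
  destruct (Req_EM_T (tagv a) 0); [|contradiction].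
  destruct (pickx_ex _ Hx) as [x Ex]. rewrite Ex. exists x; split; auto. apply pickx_some; auto.
Qed.

Lemma Out_tag1 : forall prec Hwf a, tagv a = 1 -> (exists x, Good1 prec a (Prev prec Hwf a) x) ->
  exists x, Out prec Hwf a = (Some (x, GG a x), None) /\ Good1 prec a (Prev prec Hwf a) x.
Proof.
  intros prec Hwf a Ht Hx. rewrite Out_eq. unfold step.
  destruct (Req_EM_T (tagv a) 0); [lra|].
  destruct (Req_EM_T (tagv a) 1); [|contradiction].
  destruct (pickx_ex _ Hx) as [x Ex]. rewrite Ex. exists x; split; auto. apply pickx_some; auto.
Qed.

Lemma Out_tag2 : forall prec Hwf a, tagv a = 2 -> ~ span (Prev prec Hwf a) (VV a) ->
  (exists x, Good2 prec a (Prev prec Hwf a) x) ->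
  exists x, Out prec Hwf a = (Some (x, - x), Some (bpt a x)).
Proof.
  intros prec Hwf a Ht Hs Hx. rewrite Out_eq. unfold step.
  destruct (Req_EM_T (tagv a) 0); [lra|].
  destruct (Req_EM_T (tagv a) 1); [lra|].
  destruct (Req_EM_T (tagv a) 2); [|contradiction].
  destruct excluded_middle_informative; [contradiction|].
  destruct (pickx_ex _ Hx) as [x Ex]. rewrite Ex. exists x; auto.
Qed.

Definition pt prec Hwf (k : R * bool) : option R2 :=
  if snd k then snd (Out prec Hwf (fst k)) else fst (Out prec Hwf (fst k)).
Definition klt (prec : R -> R -> Prop) (k1 k2 : R * bool) : Prop :=
  prec (fst k1) (fst k2) \/ (fst k1 = fst k2 /\ snd k1 = false /\ snd k2 = true).

Lemma Out_indep : forall prec Hwf k p, pt prec Hwf k = Some p ->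
  ~ span (fun q => exists k', klt prec k' k /\ pt prec Hwf k' = Some q) p.
Proof.
  intros prec Hwf [a i] p Hp Hs. unfold pt in Hp; simpl in Hp.
  destruct (Out_cases prec Hwf a) as [E|[[x [E G]]|[[x [E G]]|[x [E G]]]]]; rewrite E in Hp;
    destruct i; simpl in Hp; try discriminate; injection Hp as <-.
  - apply (proj2 (proj2 G)). eapply span_mono; [|exact Hs].
    intros q [[b j] [Hk Hq]]. unfold klt in Hk; simpl in Hk.
    destruct Hk as [Hk|[_ [_ Hk]]]; [|discriminate].
    exists b. split; auto. unfold pt in Hq; simpl in Hq. destruct j; auto.
  - apply (proj2 (proj2 G)). eapply span_mono; [|exact Hs].
    intros q [[b j] [Hk Hq]]. unfold klt in Hk; simpl in Hk.
    destruct Hk as [Hk|[_ [_ Hk]]]; [|discriminate].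
    exists b. split; auto. unfold pt in Hq; simpl in Hq. destruct j; auto.
  - apply (proj2 (proj2 (proj2 G))). eapply span_mono; [|exact Hs].
    intros q [[b j] [Hk Hq]]. unfold klt in Hk; simpl in Hk. unfold pt in Hq; simpl in Hq.
    destruct Hk as [Hk|[Eb [Ej _]]].
    + left. exists b. split; auto. destruct j; auto.
    + subst b j. rewrite E in Hq. simpl in Hq. injection Hq as <-. right; auto.
  - apply (proj1 (proj2 (proj2 G))). eapply span_mono; [|exact Hs].
    intros q [[b j] [Hk Hq]]. unfold klt in Hk; simpl in Hk.
    destruct Hk as [Hk|[_ [_ Hk]]]; [|discriminate].
    exists b. split; auto. unfold pt in Hq; simpl in Hq. destruct j; auto.
Qed.

Definition OrdOK (prec : R -> R -> Prop) : Prop :=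
  (forall a b c, prec a b -> prec b c -> prec a c) /\
  (forall a b, a <> b -> prec a b \/ prec b a) /\ (forall a, ~ prec a a) /\
  (forall a, cnt (fun b => prec b a)).

Lemma klt_tot : forall prec, OrdOK prec -> forall k1 k2, k1 <> k2 -> klt prec k1 k2 \/ klt prec k2 k1.
Proof.
  intros prec [Htr [Hto [Hirr _]]] [a i] [b j] Ne. unfold klt; simpl.
  destruct (Req_dec a b) as [->|Nab].
  - destruct i, j; try (exfalso; apply Ne; reflexivity); auto.
  - destruct (Hto a b Nab); auto.
Qed.

Lemma klt_trans : forall prec, OrdOK prec -> forall k1 k2 k3, klt prec k1 k2 -> klt prec k2 k3 -> klt prec k1 k3.
Proof.
  intros prec [Htr [Hto [Hirr _]]] [a i] [b j] [c l]. unfold klt; simpl.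
  intros [H1|[E1 [I1 J1]]] [H2|[E2 [I2 J2]]]; subst.
  - left; eauto.
  - left; auto.
  - left; auto.
  - discriminate.
Qed.

Definition Aset prec Hwf : R2 -> Prop := fun p => exists a, inOut prec Hwf a p.

Lemma Aset_pt : forall prec Hwf, Aset prec Hwf = (fun p => exists k, pt prec Hwf k = Some p).
Proof.
  intros prec Hwf. apply functional_extensionality. intro p. apply propositional_extensionality.
  unfold Aset, inOut, pt. split.
  - intros [a [H|H]]; [exists (a, false) | exists (a, true)]; auto.
  - intros [[a i] H]; exists a; destruct i; auto.
Qed.

Lemma A_indep : forall prec Hwf, OrdOK prec -> Q_independent (Aset prec Hwf).
Proof.
  intros prec Hwf Hok. rewrite Aset_pt.
  apply (indep_of_keys (R * bool) (0, false) (klt prec)).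
  - apply klt_tot; auto.
  - apply klt_trans; auto.
  - apply Out_indep.
Qed.

Lemma Out_distinct : forall prec Hwf, OrdOK prec ->
  forall a b p, inOut prec Hwf a p -> inOut prec Hwf b p -> a = b.
Proof.
  intros prec Hwf Hok a b p Ha Hb. destruct (Req_dec a b) as [E|Ne]; auto. exfalso.
  assert (Hgen : forall a b, prec a b -> inOut prec Hwf a p -> inOut prec Hwf b p -> False).
  { intros a' b' Hp Ha' Hb'.
    assert (Hk : exists i, pt prec Hwf (b', i) = Some p).
    { destruct Hb' as [H|H]; [exists false|exists true]; auto. }
    destruct Hk as [i Hi]. apply (Out_indep prec Hwf (b', i) p Hi).
    apply span_mem. destruct Ha' as [H|H]; [exists (a', false) | exists (a', true)];
      split; auto; left; auto. }
  destruct Hok as [_ [Hto _]]. destruct (Hto a b Ne); eauto.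
Qed.

Lemma inOut_cnt : forall prec Hwf a, cnt (inOut prec Hwf a).
Proof.
  intros prec Hwf a. unfold inOut. apply cnt_union2; [exact (0,0)| |]; apply cnt_subsingleton;
    intros x y Hx Hy; rewrite Hx in Hy; injection Hy; auto.
Qed.

Lemma Prev_cnt : forall prec Hwf, OrdOK prec -> forall a, cnt (Prev prec Hwf a).
Proof.
  intros prec Hwf Hok a. unfold Prev.
  apply (cnt_union R R2 (0,0) (fun b => prec b a) (fun b => inOut prec Hwf b)).
  - apply Hok.
  - intros; apply inOut_cnt.
Qed.

Lemma Lcount : forall prec Hwf (J : R -> Prop), cnt J ->
  cnt (fun x => exists b y, J b /\ inOut prec Hwf b (x, y)).
Proof.
  intros prec Hwf J HJ.
  apply cnt_sub with (T := fun x => exists b, J b /\ (fun b x => exists y, inOut prec Hwf b (x, y)) b x).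
  - intros x [b [y [Jb H]]]. exists b; split; eauto.
  - apply cnt_union; auto. exact 0. intros b _.
    apply (cnt_image R2 R (inOut prec Hwf b) _ fst (inOut_cnt prec Hwf b)).
    intros x [y H]. exists (x, y); auto.
Qed.


Definition z0 : nat -> R := fun _ => 0.

Lemma inc_dec_sub : forall f g : R -> R, strictly_increasing f -> strictly_decreasing g ->
  forall x y, f x = g x -> f y = g y -> x = y.
Proof.
  intros f g Hf Hg x y Hx Hy. destruct (Rtotal_order x y) as [H|[H|H]]; auto; exfalso.
  - assert (f x < f y) by (apply Hf; auto). assert (g y < g x) by (apply Hg; auto). lra.
  - assert (f y < f x) by (apply Hf; auto). assert (g x < g y) by (apply Hg; auto). lra.
Qed.

Lemma seg_le_cnt : forall prec, OrdOK prec -> forall c, cnt (fun b => ~ prec c b).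
Proof.
  intros prec Hok c. destruct Hok as [_ [Hto [_ Hseg]]].
  apply cnt_sub with (T := fun b => prec b c \/ b = c).
  - intros b Hb. destruct (Req_dec b c) as [E|Ne]; auto. destruct (Hto b c Ne); auto; contradiction.
  - apply (cnt_union2 R 0); [apply Hseg | apply cnt_single].
Qed.

Lemma cnt_pullback : forall X Y (T : X -> Prop) (S : Y -> Prop) (h : X -> Y), cnt S ->
  (forall a, T a -> S (h a)) -> (forall a b, T a -> T b -> h a = h b -> a = b) -> cnt T.
Proof.
  intros X Y T S h [f Hf] H1 H2. exists (fun a => f (h a)). intros a b Ta Tb E.
  apply H2; auto.
Qed.

Lemma FF_code : forall a f, cmpt 1 a = fc f -> strictly_increasing f -> continuity f -> FF a = f.
Proof. intros a f E Hi Hc. unfold FF. rewrite E. apply decF_code; auto. Qed.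
Lemma GG_code : forall a f, cmpt 2 a = fc f -> strictly_decreasing f -> continuity f -> GG a = f.
Proof. intros a f E Hi Hc. unfold GG. rewrite E. apply decG_code; auto. Qed.

Lemma FF_inc : forall a, strictly_increasing (FF a).
Proof. intro a. apply (decF_spec (cmpt 1 a)). Qed.
Lemma GG_dec : forall a, strictly_decreasing (GG a).
Proof. intro a. apply (decG_spec (cmpt 2 a)). Qed.

Lemma span_fst_cnt : forall (P : R2 -> Prop) (h : R -> R), cnt P -> cnt (fun x => span P (x, h x)).
Proof.
  intros P h HP. apply (cnt_image R2 R (span P) _ fst (span_cnt P HP)).
  intros x Hx. exists (x, h x); auto.
Qed.

Lemma sub_cnt_union : forall prec, OrdOK prec -> forall a (Q : R -> R -> Prop),
  (forall c x y, Q c x -> Q c y -> x = y) -> cnt (fun x => exists c, prec c a /\ Q c x).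
Proof.
  intros prec Hok a Q HQ. apply cnt_union. exact 0. apply Hok.
  intros c _. apply cnt_subsingleton. intros; eapply HQ; eauto.
Qed.

Lemma luzin_meager : forall prec Hwf, OrdOK prec -> forall f, strictly_increasing f -> continuity f ->
  forall M, meager M -> cnt (fun x => Aset prec Hwf (x, f x) /\ M x).
Proof.
  intros prec Hwf Hok f Hf Hcf M HM.
  destruct (Mc_cofinal M HM) as [s3 Hs3].
  destruct (comp_surj 0 0 (fc f) z0 s3 z0 z0 (0,0)) as [c Hc].
  assert (FFc : FF c = f) by (apply FF_code; tauto).
  apply cnt_sub with (T := fun x => exists b y, (~ prec c b) /\ inOut prec Hwf b (x, y)).
  2: { apply Lcount. apply seg_le_cnt; auto. }
  intros x [[b Hb] Mx]. exists b, (f x). split; auto. intro Hcb.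
  destruct (Out_avoid _ _ _ _ Hb c Hcb) as [[H|H] _]; simpl in H.
  - apply H. unfold MM. destruct Hc as [_ [_ [_ [E _]]]]. rewrite E. auto.
  - apply H. rewrite FFc; auto.
Qed.

Lemma luzin_borel : forall prec Hwf, OrdOK prec -> forall f, strictly_increasing f -> continuity f ->
  forall B, borel B -> ~ meager B -> ~ cnt (fun x => Aset prec Hwf (x, f x) /\ B x).
Proof.
  intros prec Hwf Hok f Hf Hcf B HB HBm Hcnt.
  destruct (BBc_cofinal B HB) as [s5 Hs5].
  apply (fiber_uncnt 0 (fc f) z0 z0 z0 s5 (0,0)).
  set (T := fun a => cmpt 0 a 0%nat = 0 /\ cmpt 1 a = fc f /\ cmpt 2 a = z0 /\ cmpt 3 a = z0 /\
    cmpt 4 a = z0 /\ cmpt 5 a = s5 /\ cmpt 6 a 0%nat = fst (0, 0) /\ cmpt 6 a 1%nat = snd (0, 0)).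
  assert (Key : forall a, T a -> exists x, fst (Out prec Hwf a) = Some (x, f x) /\ B x).
  { intros a Ta. assert (FFa : FF a = f) by (apply FF_code; unfold T in Ta; tauto).
    assert (BBa : forall x, BB a x <-> B x).
    { intro x. unfold BB. destruct Ta as [_ [_ [_ [_ [_ [E _]]]]]]. rewrite E. auto. }
    set (P := Prev prec Hwf a).
    set (Bad := fun x => (exists c, prec c a /\ MM c x) \/
                 ((exists c, prec c a /\ (NN c x /\ GG c x = f x)) \/ span P (x, f x))).
    assert (HBad : meager Bad).
    { apply meager_union2.
      - apply meager_union. apply Hok. intros; apply Mc_meager.
      - apply meager_union2; apply meager_cnt.
        + apply sub_cnt_union; auto. intros c x y [_ Hx] [_ Hy].
          apply (inc_dec_sub f (GG c) Hf (GG_dec c)); auto.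
        + apply span_fst_cnt. apply Prev_cnt; auto. }
    assert (Hx : exists x, B x /\ ~ Bad x).
    { apply NNPP. intro Hn. apply HBm. apply meager_sub with (M' := Bad); auto.
      intros x Bx. apply NNPP. intro Hb. apply Hn; eauto. }
    destruct Hx as [x [Bx Nb]].
    destruct (Out_tag0 prec Hwf a) as [x' [E G]].
    { unfold tagv. unfold T in Ta; tauto. }
    { exists x. split; [apply BBa; auto|]. rewrite FFa. split.
      - intros c Hc. simpl. split.
        + left. intro Mx. apply Nb. left. eauto.
        + destruct (classic (NN c x /\ GG c x = f x)) as [H|H].
          * exfalso. apply Nb. right; left; eauto.
          * apply not_and_or in H; auto.
      - intro Hs. apply Nb. right; right; auto. }
    exists x'. rewrite E. simpl. rewrite FFa. split; auto. apply BBa. apply G. }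
  destruct (choice_on R R 0 T (fun a x => fst (Out prec Hwf a) = Some (x, f x) /\ B x) Key) as [h Hh].
  apply (cnt_pullback R R T _ h Hcnt).
  - intros a Ta. destruct (Hh a Ta) as [E Bx]. split; auto. exists a. left; auto.
  - intros a b Ta Tb E. destruct (Hh a Ta) as [Ea _]. destruct (Hh b Tb) as [Eb _].
    rewrite E in Ea. apply (Out_distinct prec Hwf Hok a b (h b, f (h b))); left; auto.
Qed.

Lemma sierp_null : forall prec Hwf, OrdOK prec -> forall g, strictly_decreasing g -> continuity g ->
  forall N, null_set N -> cnt (fun x => Aset prec Hwf (x, g x) /\ N x).
Proof.
  intros prec Hwf Hok g Hg Hcg N HN.
  destruct (Nc_cofinal N HN) as [s4 Hs4].
  destruct (comp_surj 0 0 z0 (fc g) z0 s4 z0 (0,0)) as [c Hc].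
  assert (GGc : GG c = g) by (apply GG_code; tauto).
  apply cnt_sub with (T := fun x => exists b y, (~ prec c b) /\ inOut prec Hwf b (x, y)).
  2: { apply Lcount. apply seg_le_cnt; auto. }
  intros x [[b Hb] Nx]. exists b, (g x). split; auto. intro Hcb.
  destruct (Out_avoid _ _ _ _ Hb c Hcb) as [_ [H|H]]; simpl in H.
  - apply H. unfold NN. destruct Hc as [_ [_ [_ [_ [E _]]]]]. rewrite E. auto.
  - apply H. rewrite GGc; auto.
Qed.

Lemma sierp_borel : forall prec Hwf, OrdOK prec -> forall g, strictly_decreasing g -> continuity g ->
  forall B, borel B -> ~ null_set B -> ~ cnt (fun x => Aset prec Hwf (x, g x) /\ B x).
Proof.
  intros prec Hwf Hok g Hg Hcg B HB HBm Hcnt.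
  destruct (BBc_cofinal B HB) as [s5 Hs5].
  apply (fiber_uncnt 1 z0 (fc g) z0 z0 s5 (0,0)).
  set (T := fun a => cmpt 0 a 0%nat = 1 /\ cmpt 1 a = z0 /\ cmpt 2 a = fc g /\ cmpt 3 a = z0 /\
    cmpt 4 a = z0 /\ cmpt 5 a = s5 /\ cmpt 6 a 0%nat = fst (0, 0) /\ cmpt 6 a 1%nat = snd (0, 0)).
  assert (Key : forall a, T a -> exists x, fst (Out prec Hwf a) = Some (x, g x) /\ B x).
  { intros a Ta. assert (GGa : GG a = g) by (apply GG_code; unfold T in Ta; tauto).
    assert (BBa : forall x, BB a x <-> B x).
    { intro x. unfold BB. destruct Ta as [_ [_ [_ [_ [_ [E _]]]]]]. rewrite E. auto. }
    set (P := Prev prec Hwf a).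
    set (Bad := fun x => (exists c, prec c a /\ NN c x) \/
                 ((exists c, prec c a /\ (MM c x /\ FF c x = g x)) \/ span P (x, g x))).
    assert (HBad : null_set Bad).
    { apply null_union2.
      - apply null_union. apply Hok. intros; apply Nc_null.
      - apply null_union2; apply null_cnt.
        + apply sub_cnt_union; auto. intros c x y [_ Hx] [_ Hy].
          apply (inc_dec_sub (FF c) g (FF_inc c) Hg); auto.
        + apply span_fst_cnt. apply Prev_cnt; auto. }
    assert (Hx : exists x, B x /\ ~ Bad x).
    { apply NNPP. intro Hn. apply HBm. apply null_sub with (M := Bad); auto.
      intros x Bx. apply NNPP. intro Hb. apply Hn; eauto. }
    destruct Hx as [x [Bx Nb]].
    destruct (Out_tag1 prec Hwf a) as [x' [E G]].
    { unfold tagv. unfold T in Ta; tauto. }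
    { exists x. split; [apply BBa; auto|]. rewrite GGa. split.
      - intros c Hc. simpl. split.
        + destruct (classic (MM c x /\ FF c x = g x)) as [H|H].
          * exfalso. apply Nb. right; left; eauto.
          * apply not_and_or in H; auto.
        + left. intro Nx. apply Nb. left. eauto.
      - intro Hs. apply Nb. right; right; auto. }
    exists x'. rewrite E. simpl. rewrite GGa. split; auto. apply BBa. apply G. }
  destruct (choice_on R R 0 T (fun a x => fst (Out prec Hwf a) = Some (x, g x) /\ B x) Key) as [h Hh].
  apply (cnt_pullback R R T _ h Hcnt).
  - intros a Ta. destruct (Hh a Ta) as [E Bx]. split; auto. exists a. left; auto.
  - intros a b Ta Tb E. destruct (Hh a Ta) as [Ea _]. destruct (Hh b Tb) as [Eb _].
    rewrite E in Ea. apply (Out_distinct prec Hwf Hok a b (h b, g (h b))); left; auto.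
Qed.

Lemma A_span : forall prec Hwf, OrdOK prec -> Q_spanning (Aset prec Hwf).
Proof.
  intros prec Hwf Hok v.
  destruct (comp_surj 2 0 z0 z0 z0 z0 z0 v) as [a Ha].
  assert (VVa : VV a = v) by (unfold VV; apply R2_eq; simpl; tauto).
  assert (Ta : tagv a = 2) by (unfold tagv; tauto).
  set (P := Prev prec Hwf a).
  assert (PA : forall p, P p -> Aset prec Hwf p).
  { intros p [b [_ H]]. exists b; auto. }
  destruct (classic (span P v)) as [Hs|Hs].
  { apply span_mono with (S := P); auto. }
  set (v1 := fst v). set (v2 := snd v).
  set (U := fun x => exists c, prec c a /\ NN c x).
  set (Bad := fun x => U x \/ (U (v1 - x) \/
     ((exists c, prec c a /\ (MM c x /\ FF c x = - x)) \/
     ((exists c, prec c a /\ (MM c (v1 - x) /\ FF c (v1 - x) = v2 + x)) \/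
     (span P (x, - x) \/ span (fun p => P p \/ p = (x, - x)) (v1 - x, v2 + x)))))).
  assert (HU : null_set U) by (apply null_union; [apply Hok | intros; apply Nc_null]).
  assert (HPc : cnt P) by (apply Prev_cnt; auto).
  assert (HBad : null_set Bad).
  { apply null_union2; auto. apply null_union2; [apply null_reflect; auto|].
    apply null_union2; [|apply null_union2; [|apply null_union2]]; apply null_cnt.
    - apply sub_cnt_union; auto. intros c x y [_ Hx] [_ Hy].
      apply (inc_dec_sub (FF c) (fun t => - t) (FF_inc c)); auto. intros s t Hst; lra.
    - apply sub_cnt_union; auto. intros c x y [_ Hx] [_ Hy].
      apply (inc_dec_sub (fun t => v2 + t) (fun t => FF c (v1 - t))); auto.
      + intros s t Hst; lra.
      + intros s t Hst. apply FF_inc. lra.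
    - apply span_fst_cnt; auto.
    - assert (Hc2 : cnt (fun p : R2 * Q => span P (fst p) /\ (fun _ => True) (snd p)))
        by (apply (cnt_prod R2 Q (span P) (fun _ => True)); [apply span_cnt; auto | apply cnt_Q]).
      apply (cnt_image _ _ _ _ (fun p => (v1 - fst (fst p)) / (1 + Q2R (snd p))) Hc2).
      intros x Hx. apply span_insert in Hx. destruct Hx as [w [q [Hw E]]].
      unfold vadd, vsc in E. simpl in E. injection E as E1 E2.
      exists (w, q). simpl. split; auto.
      destruct (Req_dec (1 + Q2R q) 0) as [Hq|Hq].
      + exfalso. apply Hs. replace v with w; auto.
        apply R2_eq; fold v1 v2; nra.
      + apply (Rmult_eq_reg_r (1 + Q2R q)); auto. unfold Rdiv.
        rewrite Rmult_assoc, Rinv_l by auto. fold v1 in E1. lra. }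
  assert (Hx : exists x, ~ Bad x).
  { apply NNPP. intro Hn. apply R_not_null. apply null_sub with (M := Bad); auto.
    intros x _. apply NNPP. intro Hb. apply Hn; eauto. }
  destruct Hx as [x Nb].
  destruct (Out_tag2 prec Hwf a Ta) as [x' E].
  { rewrite VVa; auto. }
  { exists x. unfold Good2. unfold bpt. rewrite VVa. fold v1 v2. split; [|split; [|split]].
    - intros c Hc. simpl. split.
      + destruct (classic (MM c x /\ FF c x = - x)) as [H|H].
        * exfalso. apply Nb. right; right; left; eauto.
        * apply not_and_or in H; auto.
      + left. intro Nx. apply Nb. left. exists c; auto.
    - intros c Hc. simpl. split.
      + destruct (classic (MM c (v1 - x) /\ FF c (v1 - x) = v2 + x)) as [H|H].
        * exfalso. apply Nb. right; right; right; left; eauto.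
        * apply not_and_or in H; auto.
      + left. intro Nx. apply Nb. right; left. exists c; auto.
    - intro H. apply Nb. right; right; right; right; left; auto.
    - intro H. apply Nb. right; right; right; right; right; auto. }
  replace v with (vadd (x', - x') (bpt a x')).
  - apply span_add; apply span_mem; exists a; unfold inOut; rewrite E; simpl; auto.
  - unfold vadd, bpt. rewrite VVa. apply R2_eq; simpl; ring.
Qed.


Lemma lac_cont : forall g, locally_abs_continuous g -> continuity g.
Proof.
  intros g Hg x eps Heps.
  destruct (Hg (x - 1) (x + 1) ltac:(lra) eps Heps) as [delta [Hd Hac]].
  exists (Rmin delta 1). split. { apply Rmin_glb_lt; lra. }
  intros y [[_ Ne] Hy]. simpl in *. unfold Rdist in *.
  assert (H1 := Rmin_l delta 1). assert (H2 := Rmin_r delta 1).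
  destruct (Rle_dec x y) as [Hxy|Hxy].
  - rewrite Rabs_right in Hy by lra.
    assert (H := Hac 0%nat (fun _ => x) (fun _ => y)). simpl in H.
    apply H; try lra; intros; try lia; lra.
  - rewrite Rabs_left in Hy by lra.
    assert (H := Hac 0%nat (fun _ => y) (fun _ => x)). simpl in H.
    rewrite <- Rabs_Ropp. replace (- (g y - g x)) with (g x - g y) by ring.
    apply H; try lra; intros; try lia; lra.
Qed.

Theorem mainTheorem9 :
  CH ->
  exists A : R2 -> Prop,
    hamel_basis_R2 A /\
    (forall f : R -> R, strictly_increasing f -> continuity f ->
       strong_luzin (fun x => A (x, f x))) /\
    (forall g : R -> R, strictly_decreasing g -> locally_abs_continuous g ->
       strong_sierpinski (fun x => A (x, g x))).
Proof.
  intro HCH. destruct (omega1_order HCH) as [prec [Hwf [Htr [Hto [Hirr Hseg]]]]].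
  assert (Hok : OrdOK prec) by (repeat split; auto).
  exists (Aset prec Hwf). split; [split; [apply A_indep | apply A_span]; auto|]. split.
  - intros f Hf Hcf. split; [|split].
    + destruct (HCH (fun x => Aset prec Hwf (x, f x))) as [Hc|Hc]; auto. exfalso.
      apply (luzin_borel prec Hwf Hok f Hf Hcf (fun _ => True)).
      * apply borel_open. intros x _. exists 1. split; [lra|auto].
      * apply R_not_meager.
      * apply cnt_sub with (T := fun x => Aset prec Hwf (x, f x)); [tauto|exact Hc].
    + intros M HM. apply luzin_meager; auto.
    + intros B HB HBm. apply luzin_borel; auto.
  - intros g Hg Hlac. assert (Hcg := lac_cont g Hlac). split; [|split].
    + destruct (HCH (fun x => Aset prec Hwf (x, g x))) as [Hc|Hc]; auto. exfalso.
      apply (sierp_borel prec Hwf Hok g Hg Hcg (fun _ => True)).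
      * apply borel_open. intros x _. exists 1. split; [lra|auto].
      * apply R_not_null.
      * apply cnt_sub with (T := fun x => Aset prec Hwf (x, g x)); [tauto|exact Hc].
    + intros N HN. apply sierp_null; auto.
    + intros B HB HBm. apply sierp_borel; auto.
Qed.
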